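(* Let $\xi\in\mathbb{R}\setminus\{0\}$, let $\epsilon_1,\epsilon_2,\dots$ be i.i.d. standard Cauchy random variables, let $Y_i=\begin{pmatrix}\xi\epsilon_i&-1\\1&0\end{pmatrix}$ and $S_n=Y_n\cdots Y_1$. Then the top Lyapunov exponent $\lambda(\xi)=\lim_{n\to\infty}\frac1n\mathbb{E}[\log\|S_n\|]$ is \[ \lambda(\xi)=\log\Big(\frac{|\xi|+\sqrt{\xi^2+4}}{2}\Big). \]
   Context: A standard Cauchy random variable has density $\frac{1}{\pi(1+x^2)}$ on $\mathbb{R}$; $\mathrm{Cauchy}(x_0,\gamma)$ has density $\frac{1}{\pi\gamma(1+((x-x_0)/\gamma)^2)}$. $\|\cdot\|$ is any matrix norm. *)

(* Defs.v *)
From Stdlib Require Import Reals Lra List.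
Import ListNotations.
Open Scope R_scope.

Record mat2 := Mat2 { m11 : R; m12 : R; m21 : R; m22 : R }.

Definition mat2_zero : mat2 := Mat2 0 0 0 0.
Definition mat2_id : mat2 := Mat2 1 0 0 1.
Definition mat2_add (A B : mat2) : mat2 :=
  Mat2 (m11 A + m11 B) (m12 A + m12 B) (m21 A + m21 B) (m22 A + m22 B).
Definition mat2_scale (c : R) (A : mat2) : mat2 :=
  Mat2 (c * m11 A) (c * m12 A) (c * m21 A) (c * m22 A).
Definition mat2_mul (A B : mat2) : mat2 :=
  Mat2 (m11 A * m11 B + m12 A * m21 B) (m11 A * m12 B + m12 A * m22 B)
       (m21 A * m11 B + m22 A * m21 B) (m21 A * m12 B + m22 A * m22 B).

Definition is_matrix_norm (N : mat2 -> R) : Prop :=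
  (forall A, 0 <= N A) /\
  (forall A, N A = 0 -> A = mat2_zero) /\
  (forall c A, N (mat2_scale c A) = Rabs c * N A) /\
  (forall A B, N (mat2_add A B) <= N A + N B) /\
  (forall A B, N (mat2_mul A B) <= N A * N B).

Definition Ymat (xi e : R) : mat2 := Mat2 (xi * e) (-1) 1 0.

(* S_n = Y_n ... Y_1, where the list is [eps_1; ...; eps_n] *)
Definition Sprod (xi : R) (es : list R) : mat2 :=
  fold_left (fun acc e => mat2_mul (Ymat xi e) acc) es mat2_id.

Definition cauchy_density (x : R) : R := / (PI * (1 + x ^ 2)).

Definition improper_int (h : R -> R) (L : R) : Prop :=
  (forall a b, inhabited (Riemann_integrable h a b)) /\
  (forall eps, 0 < eps -> exists M, forall a b (pr : Riemann_integrable h a b),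
      a < - M -> M < b -> Rabs (RiemannInt pr - L) < eps).

(* cauchy_expect n F L : E[F(eps_1,...,eps_n)] = L for eps_i i.i.d. standard
   Cauchy, expressed as an iterated improper integral against the product
   density (eps_1 outermost). *)
Fixpoint cauchy_expect (n : nat) (F : list R -> R) (L : R) : Prop :=
  match n with
  | O => L = F nil
  | S k => exists g : R -> R,
      (forall x, cauchy_expect k (fun xs => F (x :: xs)) (g x)) /\
      improper_int (fun x => g x * cauchy_density x) L
  end.

(* Main.v *)
Require Import Defs.
From Stdlib Require Import Reals Lra Lia List ClassicalEpsilon ZArith.
From Coquelicot Require Import Coquelicot.
Import ListNotations.
Open Scope R_scope.

Lemma Rabs_def2b x y : Rabs x <= y -> -y <= x /\ x <= y.
Proof. intros; split_Rabs; lra. Qed.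

Definition imp (h : R -> R) (L : R) : Prop :=
  (forall a b, ex_RInt h a b) /\
  (forall eps, 0 < eps -> exists M, forall a b, a < - M -> M < b ->
      Rabs (RInt h a b - L) < eps).

Lemma imp_improper h L : imp h L -> improper_int h L.
Proof.
  intros [H1 H2]; split.
  - intros a b; constructor; apply ex_RInt_Reals_0; auto.
  - intros eps He; destruct (H2 eps He) as [M HM]; exists M.
    intros a b pr Ha Hb; rewrite <- RInt_Reals; auto.
Qed.

Lemma improper_imp h L : improper_int h L -> imp h L.
Proof.
  intros [H1 H2]; split.
  - intros a b; destruct (H1 a b) as [pr]; apply ex_RInt_Reals_1; auto.
  - intros eps He; destruct (H2 eps He) as [M HM]; exists M.
    intros a b Ha Hb; destruct (H1 a b) as [pr]; rewrite (RInt_Reals _ _ _ pr); auto.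
Qed.

Lemma imp_ext h k L : (forall x, h x = k x) -> imp h L -> imp k L.
Proof.
  intros E [H1 H2]; split.
  - intros a b; apply ex_RInt_ext with h; auto.
  - intros eps He; destruct (H2 eps He) as [M HM]; exists M; intros a b Ha Hb.
    rewrite <- (RInt_ext h); auto.
Qed.

Lemma imp_plus h k L K : imp h L -> imp k K -> imp (fun x => h x + k x) (L + K).
Proof.
  intros [H1 H2] [K1 K2]; split.
  - intros a b; apply (ex_RInt_plus h k); auto.
  - intros eps He; destruct (H2 (eps/2)) as [M1 HM1]; try lra.
    destruct (K2 (eps/2)) as [M2 HM2]; try lra.
    exists (Rmax M1 M2); intros a b Ha Hb.
    assert (E: RInt (fun x => h x + k x) a b = RInt h a b + RInt k a b)
      by (apply (RInt_plus h k); auto).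
    rewrite E.
    assert (Rabs (RInt h a b - L) < eps/2) by (apply HM1; pose proof (Rmax_l M1 M2); lra).
    assert (Rabs (RInt k a b - K) < eps/2) by (apply HM2; pose proof (Rmax_r M1 M2); lra).
    apply Rabs_def2 in H; apply Rabs_def2 in H0; apply Rabs_def1; lra.
Qed.

Lemma imp_scal c h L : imp h L -> imp (fun x => c * h x) (c * L).
Proof.
  intros [H1 H2]; split.
  - intros a b; apply (ex_RInt_scal h); auto.
  - intros eps He.
    destruct (H2 (eps / (Rabs c + 1))) as [M HM].
    { apply Rdiv_lt_0_compat; auto; pose proof (Rabs_pos c); lra. }
    exists M; intros a b Ha Hb.
    assert (E: RInt (fun x => c * h x) a b = c * RInt h a b)
      by (apply (RInt_scal h); auto).
    rewrite E. replace (c * RInt h a b - c * L) with (c * (RInt h a b - L)) by ring.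
    rewrite Rabs_mult. specialize (HM a b Ha Hb).
    pose proof (Rabs_pos c). pose proof (Rabs_pos (RInt h a b - L)).
    apply Rle_lt_trans with ((Rabs c + 1) * Rabs (RInt h a b - L)).
    { nra. }
    replace eps with ((Rabs c + 1) * (eps / (Rabs c + 1))) by (field; lra).
    apply Rmult_lt_compat_l; lra.
Qed.

Lemma imp_minus h k L K : imp h L -> imp k K -> imp (fun x => h x - k x) (L - K).
Proof.
  intros A B. apply (imp_ext (fun x => h x + (-1) * k x)).
  { intros; ring. }
  replace (L - K) with (L + (-1) * K) by ring.
  apply imp_plus; auto; apply imp_scal; auto.
Qed.

Lemma imp_le h k L K : imp h L -> imp k K -> (forall x, h x <= k x) -> L <= K.
Proof.
  intros [H1 H2] [K1 K2] Hle.
  destruct (Rle_or_lt L K) as [|Hlt]; auto.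
  destruct (H2 ((L-K)/2)) as [M1 HM1]; try lra.
  destruct (K2 ((L-K)/2)) as [M2 HM2]; try lra.
  set (M := Rabs M1 + Rabs M2 + 1).
  assert (A1: Rabs (RInt h (-M) M - L) < (L-K)/2).
  { apply HM1; unfold M; pose proof (Rle_abs M1); pose proof (Rle_abs M2);
    pose proof (Rabs_pos M1); pose proof (Rabs_pos M2); lra. }
  assert (A2: Rabs (RInt k (-M) M - K) < (L-K)/2).
  { apply HM2; unfold M; pose proof (Rle_abs M1); pose proof (Rle_abs M2);
    pose proof (Rabs_pos M1); pose proof (Rabs_pos M2); lra. }
  assert (RInt h (-M) M <= RInt k (-M) M).
  { apply RInt_le; auto. unfold M; pose proof (Rabs_pos M1); pose proof (Rabs_pos M2); lra. }
  apply Rabs_def2 in A1; apply Rabs_def2 in A2; lra.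
Qed.

Lemma imp_abs_le h g L G : imp h L -> imp g G -> (forall x, Rabs (h x) <= g x) -> Rabs L <= G.
Proof.
  intros A B H.
  assert (L <= G) by (apply (imp_le h g); auto; intros x; specialize (H x);
     apply Rabs_def2b in H; lra).
  assert (-G <= L).
  { replace (-G) with ((-1) * G) by ring.
    apply (imp_le (fun x => (-1) * g x) h); auto. apply imp_scal; auto.
    intros x; specialize (H x); apply Rabs_def2b in H; lra. }
  apply Rabs_le; lra.
Qed.

Lemma RInt_sub_le k a b c d : a <= c -> c <= d -> d <= b ->
  (forall u v, ex_RInt k u v) -> (forall x, 0 <= k x) ->
  RInt k c d <= RInt k a b.
Proof.
  intros ac cd db Ex Hk.
  rewrite <- (RInt_Chasles k a c b); auto.
  rewrite <- (RInt_Chasles k c d b); auto.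
  unfold plus; simpl.
  assert (0 <= RInt k a c) by (apply RInt_ge_0; auto).
  assert (0 <= RInt k d b) by (apply RInt_ge_0; auto).
  lra.
Qed.

Lemma imp_nonneg_bound k K : imp k K -> (forall x, 0 <= k x) ->
  forall a b, a <= b -> RInt k a b <= K.
Proof.
  intros [K1 K2] Hk a b ab.
  destruct (Rle_or_lt (RInt k a b) K) as [|Hlt]; auto.
  destruct (K2 (RInt k a b - K)) as [M HM]; try lra.
  set (m := Rabs M + Rabs a + Rabs b + 1).
  assert (A: Rabs (RInt k (-m) m - K) < RInt k a b - K).
  { apply HM; unfold m; pose proof (Rle_abs M); pose proof (Rabs_pos M);
    pose proof (Rabs_pos a); pose proof (Rabs_pos b); lra. }
  assert (RInt k a b <= RInt k (-m) m).
  { apply RInt_sub_le; auto; unfold m;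
    pose proof (Rabs_pos M); pose proof (Rle_abs a); pose proof (Rle_abs b);
    pose proof (Rabs_pos a); pose proof (Rabs_pos b);
    pose proof (Rle_abs (-a)) as Hna; rewrite Rabs_Ropp in Hna; lra. }
  apply Rabs_def2 in A; lra.
Qed.

Lemma imp_mono_exists k B : (forall a b, ex_RInt k a b) -> (forall x, 0 <= k x) ->
  (forall M, 0 <= M -> RInt k (-M) M <= B) -> exists K, imp k K /\ K <= B.
Proof.
  intros Ex Hk HB.
  set (E := fun y => exists M, 0 <= M /\ y = RInt k (-M) M).
  assert (Eb: bound E) by (exists B; intros y [M [HM ->]]; auto).
  assert (Ene: exists y, E y) by (exists (RInt k (-0) 0); exists 0; split; auto; lra).
  destruct (completeness E Eb Ene) as [K [Hub Hlub]].
  exists K; split.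
  - split; auto.
    intros eps He.
    assert (exists M, 0 <= M /\ K - eps < RInt k (-M) M) as [M0 [HM0 HK]].
    { apply Classical_Prop.NNPP; intros Hn.
      assert (is_upper_bound E (K - eps)).
      { intros y [M [HM ->]]. destruct (Rle_or_lt (RInt k (-M) M) (K - eps)); auto.
        exfalso; apply Hn; exists M; auto. }
      specialize (Hlub _ H); lra. }
    exists M0; intros a b Ha Hb.
    assert (RInt k (-M0) M0 <= RInt k a b) by (apply RInt_sub_le; auto; lra).
    set (m := Rmax (-a) b).
    assert (RInt k a b <= RInt k (-m) m).
    { apply RInt_sub_le; auto; unfold m; pose proof (Rmax_l (-a) b); pose proof (Rmax_r (-a) b); lra. }
    assert (RInt k (-m) m <= K).
    { apply Hub; exists m; split; auto; unfold m; pose proof (Rmax_l (-a) b); lra. }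
    apply Rabs_def1; lra.
  - apply Hlub; intros y [M [HM ->]]; auto.
Qed.

Lemma imp_dom h k K : (forall a b, ex_RInt h a b) -> imp k K ->
  (forall x, Rabs (h x) <= k x) -> exists L, imp h L.
Proof.
  intros Exh Hk Hle.
  assert (k0: forall x, 0 <= k x) by (intros x; specialize (Hle x); pose proof (Rabs_pos (h x)); lra).
  destruct (imp_mono_exists (fun x => h x + k x) (2 * K)) as [L [HL _]].
  - intros a b; apply (ex_RInt_plus h k); auto; apply Hk.
  - intros x; specialize (Hle x); apply Rabs_def2b in Hle; lra.
  - intros M HM.
    assert (RInt (fun x => h x + k x) (-M) M <= RInt (fun x => 2 * k x) (-M) M).
    { apply RInt_le; try lra. apply (ex_RInt_plus h k); auto; apply Hk.
      apply (ex_RInt_scal k); apply Hk.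
      intros x _; specialize (Hle x); apply Rabs_def2b in Hle; lra. }
    assert (RInt (fun x => 2 * k x) (-M) M = 2 * RInt k (-M) M) by (apply (RInt_scal k); apply Hk).
    assert (RInt k (-M) M <= K) by (apply imp_nonneg_bound; auto; lra).
    lra.
  - exists (L - K). apply (imp_ext (fun x => (h x + k x) - k x)); [intros; ring|].
    apply imp_minus; auto.
Qed.

Definition limp (F : R -> R) (L : R) := forall eps, 0 < eps -> exists M, forall x, M < x -> Rabs (F x - L) < eps.
Definition limm (F : R -> R) (L : R) := forall eps, 0 < eps -> exists M, forall x, x < - M -> Rabs (F x - L) < eps.

Lemma imp_antideriv (F h : R -> R) Lp Lm : (forall x, is_derive F x (h x)) -> (forall x, continuous h x) ->
  limp F Lp -> limm F Lm -> imp h (Lp - Lm).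
Proof.
  intros D C Hp Hm.
  assert (E: forall a b, RInt h a b = F b - F a).
  { intros a b; apply is_RInt_unique; apply (is_RInt_derive F h); auto. }
  split.
  - intros a b; exists (F b - F a); apply (is_RInt_derive F h); auto.
  - intros eps He. destruct (Hp (eps/2)) as [M1 H1]; try lra.
    destruct (Hm (eps/2)) as [M2 H2]; try lra.
    exists (Rmax M1 M2); intros a b Ha Hb; rewrite E.
    specialize (H1 b ltac:(pose proof (Rmax_l M1 M2); lra)).
    specialize (H2 a ltac:(pose proof (Rmax_r M1 M2); lra)).
    apply Rabs_def2 in H1; apply Rabs_def2 in H2; apply Rabs_def1; lra.
Qed.

Lemma cont_eps (f : R -> R) x0 : continuous f x0 ->
  forall eps, 0 < eps -> exists d, 0 < d /\ forall x, Rabs (x - x0) < d -> Rabs (f x - f x0) < eps.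
Proof.
  intros C eps He. apply continuity_pt_filterlim in C.
  destruct (C eps He) as [d [Hd H]]. exists d; split; [lra|].
  intros x Hx. destruct (Req_dec x x0) as [->|Hne].
  - rewrite Rminus_diag, Rabs_R0; auto.
  - apply (H x). split; [split; auto|]; [exact I| ]. unfold dist; simpl; unfold R_dist; auto.
Qed.

Lemma eps_cont (f : R -> R) x0 :
  (forall eps, 0 < eps -> exists d, 0 < d /\ forall x, Rabs (x - x0) < d -> Rabs (f x - f x0) <= eps) ->
  continuous f x0.
Proof.
  intros H. apply continuity_pt_filterlim.
  intros eps He. destruct (H (eps/2)) as [d [Hd Hx]]; try lra.
  exists d; split; [lra|]. intros x [_ Hd']. unfold dist in *; simpl in *; unfold R_dist in *.
  specialize (Hx x Hd'); lra.
Qed.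

Lemma cont_ex (h : R -> R) : (forall x, continuous h x) -> forall a b, ex_RInt h a b.
Proof. intros C a b. apply (ex_RInt_continuous (V:=R_CompleteNormedModule)); auto. Qed.

Lemma deriv_cont (f : R -> R) x : ex_derive f x -> continuous f x.
Proof. intros H. apply (ex_derive_continuous (K:=R_AbsRing) (V:=R_NormedModule)). exact H. Qed.

Lemma PI_pos' : 0 < PI. Proof. exact PI_RGT_0. Qed.

Lemma dens_pos x : 0 < cauchy_density x.
Proof.
  unfold cauchy_density. apply Rinv_0_lt_compat. apply Rmult_lt_0_compat. apply PI_RGT_0.
  pose proof (pow2_ge_0 x); lra.
Qed.

Lemma dens_cont x : continuous cauchy_density x.
Proof.
  apply deriv_cont. unfold cauchy_density. auto_derive.
  pose proof PI_RGT_0; pose proof (pow2_ge_0 x). apply Rgt_not_eq; simpl in *; nra.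
Qed.

Lemma limp_atan : limp atan (PI/2).
Proof.
  intros eps He. destruct (cont_eps atan 0 (continuous_atan 0) eps He) as [d [Hd H]].
  exists (/d). intros x Hx.
  assert (0 < /d) by (apply Rinv_0_lt_compat; auto).
  assert (xp: 0 < x) by lra.
  rewrite <- (Rinv_inv x) at 1. rewrite atan_inv.
  2: apply Rinv_0_lt_compat; auto.
  specialize (H (/x)). rewrite atan_0 in H.
  replace (PI / 2 - atan (/ x) - PI / 2) with (-(atan (/x) - 0)) by ring.
  rewrite Rabs_Ropp; apply H. rewrite Rminus_0_r.
  rewrite Rabs_pos_eq. 2: left; apply Rinv_0_lt_compat; auto.
  rewrite <- (Rinv_inv d). apply Rinv_lt_contravar; auto. apply Rmult_lt_0_compat; auto.
Qed.

Lemma limm_of_limp (F : R -> R) L : limp (fun x => F (-x)) L -> limm F L.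
Proof.
  intros H eps He. destruct (H eps He) as [M HM]. exists M. intros x Hx.
  specialize (HM (-x) ltac:(lra)). rewrite Ropp_involutive in HM; auto.
Qed.

Lemma limm_atan : limm atan (-(PI/2)).
Proof.
  apply limm_of_limp. intros eps He. destruct (limp_atan eps He) as [M HM].
  exists M; intros x Hx. rewrite atan_opp.
  replace (- atan x - - (PI / 2)) with (-(atan x - PI/2)) by ring. rewrite Rabs_Ropp; auto.
Qed.

Lemma limp_comp (F g : R -> R) L : limp F L -> (forall M, exists N, forall x, N < x -> M < g x) ->
  limp (fun x => F (g x)) L.
Proof.
  intros H G eps He. destruct (H eps He) as [M HM]. destruct (G M) as [N HN].
  exists N. intros x Hx. apply HM, HN; auto.
Qed.

Lemma limm_comp (F g : R -> R) L : limm F L -> (forall M, exists N, forall x, x < - N -> g x < - M) ->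
  limm (fun x => F (g x)) L.
Proof.
  intros H G eps He. destruct (H eps He) as [M HM]. destruct (G M) as [N HN].
  exists N. intros x Hx. apply HM, HN; auto.
Qed.

Lemma limp_plus F G L K : limp F L -> limp G K -> limp (fun x => F x + G x) (L + K).
Proof.
  intros A B eps He. destruct (A (eps/2)) as [M1 H1]; try lra. destruct (B (eps/2)) as [M2 H2]; try lra.
  exists (Rmax M1 M2). intros x Hx.
  specialize (H1 x ltac:(pose proof (Rmax_l M1 M2); lra)).
  specialize (H2 x ltac:(pose proof (Rmax_r M1 M2); lra)).
  apply Rabs_def2 in H1; apply Rabs_def2 in H2; apply Rabs_def1; lra.
Qed.

Lemma limm_plus F G L K : limm F L -> limm G K -> limm (fun x => F x + G x) (L + K).
Proof.
  intros A B eps He. destruct (A (eps/2)) as [M1 H1]; try lra. destruct (B (eps/2)) as [M2 H2]; try lra.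
  exists (Rmax M1 M2). intros x Hx.
  specialize (H1 x ltac:(pose proof (Rmax_l M1 M2); lra)).
  specialize (H2 x ltac:(pose proof (Rmax_r M1 M2); lra)).
  apply Rabs_def2 in H1; apply Rabs_def2 in H2; apply Rabs_def1; lra.
Qed.

Lemma limp_scal c F L : limp F L -> limp (fun x => c * F x) (c * L).
Proof.
  intros A eps He. destruct (A (eps / (Rabs c + 1))) as [M HM].
  { apply Rdiv_lt_0_compat; auto; pose proof (Rabs_pos c); lra. }
  exists M. intros x Hx. specialize (HM x Hx).
  replace (c * F x - c * L) with (c * (F x - L)) by ring. rewrite Rabs_mult.
  pose proof (Rabs_pos c). pose proof (Rabs_pos (F x - L)).
  apply Rle_lt_trans with ((Rabs c + 1) * Rabs (F x - L)); [nra|].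
  replace eps with ((Rabs c + 1) * (eps / (Rabs c + 1))) by (field; lra).
  apply Rmult_lt_compat_l; lra.
Qed.

Lemma limm_scal c F L : limm F L -> limm (fun x => c * F x) (c * L).
Proof.
  intros A. apply limm_of_limp. apply (limp_scal c (fun x => F (-x))).
  intros eps He. destruct (A eps He) as [M HM]. exists M. intros x Hx. apply HM; lra.
Qed.

Lemma limp_const c : limp (fun _ => c) c.
Proof. intros eps He; exists 0; intros; rewrite Rminus_diag, Rabs_R0; auto. Qed.
Lemma limm_const c : limm (fun _ => c) c.
Proof. intros eps He; exists 0; intros; rewrite Rminus_diag, Rabs_R0; auto. Qed.

Lemma imp_dens : imp cauchy_density 1.
Proof.
  replace 1 with (/PI * (PI/2) - /PI * (-(PI/2))) by (field; apply PI_neq0).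
  apply (imp_antideriv (fun x => /PI * atan x)).
  - intros x. auto_derive; auto. unfold cauchy_density. field.
    pose proof (pow2_ge_0 x). pose proof PI_neq0. split; auto. simpl in *; nra.
  - apply dens_cont.
  - apply limp_scal, limp_atan.
  - apply limm_scal, limm_atan.
Qed.

Definition phi (x : R) := sqrt (1 + Rabs x).

Lemma phi_ge1 x : 1 <= phi x.
Proof.
  unfold phi. rewrite <- sqrt_1 at 1. apply sqrt_le_1_alt. pose proof (Rabs_pos x); lra.
Qed.

Lemma phi_cont x : continuous phi x.
Proof.
  unfold phi. apply (continuous_comp (fun x => 1 + Rabs x) sqrt).
  apply (continuous_plus (fun _ => 1) Rabs). apply continuous_const. apply continuous_Rabs.
  apply continuity_pt_filterlim. apply continuity_pt_sqrt. pose proof (Rabs_pos x); lra.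
Qed.

Lemma div_le_div a b c d : 0 < b -> 0 < d -> a * d <= c * b -> a / b <= c / d.
Proof.
  intros Hb Hd H. unfold Rdiv.
  apply Rmult_le_reg_r with (b * d). nra.
  replace (a * / b * (b * d)) with (a * d) by (field; lra).
  replace (c * / d * (b * d)) with (c * b) by (field; lra). auto.
Qed.

Definition phid x := phi x * cauchy_density x.

Lemma phid_cont x : continuous phid x.
Proof. unfold phid. apply (continuous_mult phi cauchy_density). apply phi_cont. apply dens_cont. Qed.

Lemma phid_pos x : 0 <= phid x.
Proof. unfold phid. pose proof (phi_ge1 x); pose proof (dens_pos x); nra. Qed.

Lemma phid_half_pos M : 0 <= M -> RInt phid 0 M <= 4 / PI.
Proof.
  intros HM. pose proof PI_RGT_0 as Hpi.
  set (G := fun x => - 4 / (PI * sqrt (1 + x))).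
  set (m := fun x => 2 / (PI * ((1 + x) * sqrt (1 + x)))).
  assert (HG: forall x, 0 <= x -> is_derive G x (m x)).
  { intros x Hx. unfold G, m. auto_derive.
    - assert (0 < sqrt (1+x)) by (apply sqrt_lt_R0; lra).
      split. lra. split; auto. apply Rgt_not_eq, Rmult_lt_0_compat; auto.
    - assert (0 < sqrt (1+x)) by (apply sqrt_lt_R0; lra).
      pose proof (sqrt_sqrt (1+x) ltac:(lra)).
      set (s := sqrt (1 + x)) in *. rewrite <- H0. field. lra. }
  assert (Hint: is_RInt m 0 M (G M - G 0)).
  { apply (is_RInt_derive G m). intros x Hx. apply HG. rewrite Rmin_left in Hx; lra.
    intros x Hx. rewrite Rmin_left in Hx by lra.
    unfold m. apply deriv_cont. auto_derive.
    assert (0 < sqrt (1+x)) by (apply sqrt_lt_R0; lra).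
    repeat split; try lra. apply Rgt_not_eq. apply Rmult_lt_0_compat; auto. apply Rmult_lt_0_compat; lra. }
  assert (RInt phid 0 M <= RInt m 0 M).
  { apply RInt_le; auto. apply cont_ex, phid_cont. eexists; eauto.
    intros x Hx. unfold phid, phi, m, cauchy_density. rewrite Rabs_pos_eq by lra.
    assert (0 < sqrt (1+x)) by (apply sqrt_lt_R0; lra).
    pose proof (sqrt_sqrt (1+x) ltac:(lra)) as H1.
    replace (sqrt (1 + x) * / (PI * (1 + x ^ 2))) with (sqrt (1 + x) / (PI * (1 + x ^ 2))) by reflexivity.
    apply div_le_div. apply Rmult_lt_0_compat; auto; nra. apply Rmult_lt_0_compat; auto; nra.
    replace (sqrt (1 + x) * (PI * ((1 + x) * sqrt (1 + x)))) with (PI * (1+x) * (sqrt (1+x) * sqrt (1+x))) by ring.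
    rewrite H1. assert (0 <= PI * ((1-x)*(1-x))) by (apply Rmult_le_pos; [lra | pose proof (Rle_0_sqr (1-x)); unfold Rsqr in *; lra]). replace (2 * (PI * (1 + x ^ 2))) with (PI * (1+x)*(1+x) + PI * ((1-x)*(1-x))) by ring. lra. }
  rewrite (is_RInt_unique m 0 M _ Hint) in H. unfold G in H.
  assert (0 < sqrt (1+M)) by (apply sqrt_lt_R0; lra).
  rewrite Rplus_0_r, sqrt_1, Rmult_1_r in H.
  assert (0 < 4 / (PI * sqrt (1 + M))) by (apply Rdiv_lt_0_compat; try lra; apply Rmult_lt_0_compat; auto).
  unfold Rdiv in *. lra.
Qed.

Lemma phid_even y : phid (- y) = phid y.
Proof. unfold phid, phi, cauchy_density. rewrite Rabs_Ropp. f_equal. f_equal. f_equal. ring. Qed.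

Lemma phid_bound M : 0 <= M -> RInt phid (-M) M <= 8 / PI.
Proof.
  intros HM.
  assert (Ex: forall a b, ex_RInt phid a b) by (apply cont_ex, phid_cont).
  rewrite <- (RInt_Chasles phid (-M) 0 M); auto. unfold plus; simpl.
  assert (E: RInt phid (-M) 0 = RInt phid 0 M).
  { pose proof (RInt_comp_lin phid (-1) 0 0 M) as H.
    replace (-1 * 0 + 0) with 0 in H by ring. replace (-1 * M + 0) with (-M) in H by ring.
    specialize (H (Ex _ _)).
    assert (H3: RInt (fun y => (-1) * phid y) 0 M = (-1) * RInt phid 0 M).
    { apply (RInt_scal (V:=R_CompleteNormedModule) phid 0 M (-1)). apply Ex. }
    assert (H4: RInt phid 0 (-M) = - RInt phid (-M) 0).
    { rewrite <- (opp_RInt_swap (V:=R_CompleteNormedModule) phid (-M) 0) by apply Ex. reflexivity. }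
    replace (RInt phid (-M) 0) with (- RInt phid 0 (-M)) by (rewrite H4; ring).
    rewrite <- H. rewrite (RInt_ext _ (fun y => (-1) * phid y)).
    rewrite H3. change (- (-1 * RInt phid 0 M) = RInt phid 0 M). ring.
    intros x _. unfold scal; simpl; unfold mult; simpl.
    replace (-1 * x + 0) with (-x) by ring. rewrite phid_even. auto. }
  rewrite E. pose proof (phid_half_pos M HM). lra.
Qed.

Lemma imp_phid : exists Cphi, imp phid Cphi.
Proof.
  destruct (imp_mono_exists phid (8/PI)) as [K [HK _]].
  apply cont_ex, phid_cont. apply phid_pos. apply phid_bound.
  exists K; auto.
Qed.

Definition Cphi : R := ClassicalEpsilon.epsilon (inhabits 0) (fun L => imp phid L).
Lemma imp_Cphi : imp phid Cphi.
Proof. unfold Cphi. apply ClassicalEpsilon.epsilon_spec. apply imp_phid. Qed.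

Lemma derive_contpt (u : R -> R) (du : R) s : is_derive u s du -> continuity_pt u s.
Proof. intros H. apply continuity_pt_filterlim. apply deriv_cont. exists du; auto. Qed.

Lemma taylor2 (u u1 u2 : R -> R) t0 c t h :
  (forall s, t0 < s -> is_derive u s (u1 s)) ->
  (forall s, t0 < s -> is_derive u1 s (u2 s)) ->
  (forall s, t0 < s -> Rabs (u2 s) <= c) -> t0 < t -> t0 < t + h ->
  Rabs (u (t+h) - u t - h * u1 t) <= h * h * c.
Proof.
  intros D1 D2 B Ht Hth.
  assert (Hmin: forall x, Rmin t (t+h) <= x -> t0 < x).
  { intros x Hx. apply Rlt_le_trans with (Rmin t (t+h)); auto.
    unfold Rmin; destruct Rle_dec; lra. }
  destruct (MVT_gen (fun s => u s - s * u1 t) t (t+h) (fun s => u1 s - u1 t)) as [c1 [Hc1 E1]].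
  { intros x Hx. apply (is_derive_minus u (fun s => s * u1 t)). apply D1, Hmin; lra.
    auto_derive; auto; ring. }
  { intros x Hx. apply continuity_pt_minus. apply derive_contpt with (u1 x). apply D1, Hmin; lra.
    apply continuity_pt_mult. apply derivable_continuous_pt, derivable_pt_id. apply continuity_pt_const; intros a b; auto. }
  destruct (MVT_gen u1 t c1 u2) as [c2 [Hc2 E2]].
  { intros x Hx. apply D2. apply Hmin. unfold Rmin, Rmax in *; destruct Rle_dec; destruct Rle_dec; lra. }
  { intros x Hx. apply derive_contpt with (u2 x). apply D2. apply Hmin. unfold Rmin, Rmax in *; destruct Rle_dec; destruct Rle_dec; lra. }
  replace (u (t + h) - u t - h * u1 t) with ((u (t + h) - (t + h) * u1 t) - (u t - t * u1 t)) by ring.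
  rewrite E1, E2.
  assert (Rabs (c1 - t) <= Rabs h).
  { unfold Rmin, Rmax in *; destruct Rle_dec; split_Rabs; lra. }
  assert (Hc2': t0 < c2) by (apply Hmin; unfold Rmin, Rmax in *; destruct Rle_dec; destruct Rle_dec; lra).
  specialize (B c2 Hc2').
  rewrite !Rabs_mult. replace (t + h - t) with h by ring.
  pose proof (Rabs_pos (u2 c2)). pose proof (Rabs_pos (c1 - t)). pose proof (Rabs_pos h).
  replace (h * h * c) with (Rabs h * Rabs h * c).
  2: { rewrite <- Rabs_mult. rewrite Rabs_pos_eq; [ring|]. nra. }
  assert (Rabs (u2 c2) * Rabs (c1 - t) <= c * Rabs h) by (apply Rmult_le_compat; auto).
  nra.
Qed.

Lemma deriv_under (f f1 f2 : R -> R -> R) (Phi Psi g : R -> R) G t0 :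
  (forall t x, t0 < t -> is_derive (fun s => f s x) t (f1 t x)) ->
  (forall t x, t0 < t -> is_derive (fun s => f1 s x) t (f2 t x)) ->
  (forall t x, t0 < t -> Rabs (f2 t x) <= g x) -> imp g G ->
  (forall t, t0 < t -> imp (f t) (Phi t)) -> (forall t, t0 < t -> imp (f1 t) (Psi t)) ->
  forall t, t0 < t -> is_derive Phi t (Psi t).
Proof.
  intros D1 D2 B HG HF HF1 t Ht.
  assert (Bnd: forall h, t0 < t + h -> Rabs (Phi (t+h) - Phi t - h * Psi t) <= h * h * G).
  { intros h Hh.
    assert (I: imp (fun x => f (t+h) x - f t x - h * f1 t x) (Phi (t+h) - Phi t - h * Psi t)).
    { apply imp_minus. apply imp_minus; auto. apply imp_scal; auto. }
    replace (h * h * G) with (h * h * G) by ring.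
    apply (imp_abs_le _ (fun x => h * h * g x) _ _ I). apply imp_scal; auto.
    intros x. apply (taylor2 (fun s => f s x) (fun s => f1 s x) (fun s => f2 s x) t0); auto. }
  assert (G0: 0 <= G).
  { apply (imp_le (fun _ => 0) g 0 G); auto.
    pose proof (imp_scal 0 _ _ imp_dens) as Z. rewrite Rmult_0_l in Z.
    eapply imp_ext; [|exact Z]. intros; simpl; ring.
    intros x. specialize (B t x Ht). pose proof (Rabs_pos (f2 t x)); lra. }
  apply is_derive_Reals. intros eps He.
  assert (dpos: 0 < Rmin (t - t0) (eps / (G + 1))).
  { apply Rmin_pos; try lra. apply Rdiv_lt_0_compat; lra. }
  exists (mkposreal _ dpos). intros h Hh0 Hh. simpl in Hh.
  assert (Hh1: Rabs h < t - t0) by (pose proof (Rmin_l (t - t0) (eps / (G+1))); lra).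
  assert (Hh2: Rabs h < eps / (G+1)) by (pose proof (Rmin_r (t - t0) (eps / (G+1))); lra).
  specialize (Bnd h ltac:(split_Rabs; lra)).
  replace ((Phi (t + h) - Phi t) / h - Psi t) with ((Phi (t + h) - Phi t - h * Psi t) / h) by (field; auto).
  unfold Rdiv. rewrite Rabs_mult, Rabs_inv.
  assert (0 < Rabs h) by (apply Rabs_pos_lt; auto).
  apply Rle_lt_trans with (Rabs h * G).
  { apply Rmult_le_reg_r with (Rabs h); auto. rewrite Rmult_assoc, Rinv_l by lra.
    replace (Rabs h * G * Rabs h) with (Rabs h * Rabs h * G) by ring.
    rewrite <- Rabs_mult, (Rabs_pos_eq (h*h)) by nra. lra. }
  apply Rle_lt_trans with (Rabs h * (G + 1)); [nra|].
  replace eps with (eps / (G + 1) * (G + 1)) by (field; lra).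
  apply Rmult_lt_compat_r; lra.
Qed.

Lemma ln_le_sub1 y : 0 < y -> ln y <= y - 1.
Proof. intros H. pose proof (exp_ineq1_le (ln y)) as E. rewrite exp_ln in E; lra. Qed.

Lemma ln_1p_le y : 0 <= y -> ln (1 + y) <= y.
Proof. intros H. pose proof (ln_le_sub1 (1+y)); lra. Qed.

Lemma ln_sq2 y : 0 < y -> ln (y * y) = 2 * ln y.
Proof. intros; rewrite ln_mult; auto; ring. Qed.

Lemma ln_sq_bound z : 0 <= z -> ln (1 + z * z) <= 4 * sqrt z.
Proof.
  intros Hz. pose proof (sqrt_pos z) as Hs. pose proof (sqrt_sqrt z Hz) as Hss.
  apply Rle_trans with (ln ((1+z)*(1+z))).
  { apply ln_le; nra. }
  rewrite ln_sq2 by lra.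
  apply Rle_trans with (2 * ln ((1 + sqrt z) * (1 + sqrt z))).
  { apply Rmult_le_compat_l; try lra. apply ln_le; nra. }
  rewrite ln_sq2 by lra. pose proof (ln_1p_le (sqrt z) Hs); lra.
Qed.

Lemma ln_le_2phi x : ln (1 + Rabs x) <= 2 * phi x.
Proof.
  unfold phi. pose proof (Rabs_pos x). set (y := 1 + Rabs x).
  assert (Hs: 0 < sqrt y) by (apply sqrt_lt_R0; unfold y; lra).
  rewrite <- (sqrt_sqrt y) at 1 by (unfold y; lra). rewrite ln_sq2 by auto.
  pose proof (ln_le_sub1 (sqrt y) Hs). lra.
Qed.

Definition fL a t x := /2 * ln ((x+a)^2 + t^2) * cauchy_density x.
Definition f1L a t x := t / ((x+a)^2+t^2) * cauchy_density x.
Definition f2L a t x := ((x+a)^2 - t^2) / ((x+a)^2+t^2)^2 * cauchy_density x.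
Definition psiL a t := (t+1)/(a^2+(t+1)^2).
Definition TL a t := /2 * ln (a^2+(t+1)^2).

Lemma fL_cont a t x : 0 < t -> continuous (fL a t) x.
Proof.
  intros Ht. unfold fL. apply (continuous_mult (fun x => /2 * ln ((x + a) ^ 2 + t ^ 2)) cauchy_density).
  - apply deriv_cont. auto_derive. pose proof (pow2_ge_0 (x+a)). assert (0 < t^2) by (apply pow_lt; lra).
    simpl in *; lra.
  - apply dens_cont.
Qed.

Lemma fL_bound a t x : 0 < t ->
  Rabs (fL a t x) <= (Rabs (ln t) + Rabs (ln (1 + Rabs a + t)) + 2) * phid x.
Proof.
  intros Ht. unfold fL, phid. pose proof (dens_pos x). pose proof (phi_ge1 x).
  rewrite Rabs_mult, (Rabs_pos_eq (cauchy_density x)) by lra.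
  rewrite <- Rmult_assoc. apply Rmult_le_compat_r; [lra|].
  pose proof (Rabs_pos a) as Pa. pose proof (Rabs_pos x) as Px.
  assert (Hq: 0 < (x + a) ^ 2 + t ^ 2) by (pose proof (pow2_ge_0 (x+a)); assert (0 < t^2) by (apply pow_lt; lra); lra).
  assert (Up: ln ((x + a) ^ 2 + t ^ 2) <= 2 * ln (1 + Rabs a + t) + 2 * ln (1 + Rabs x)).
  { rewrite <- !ln_sq2 by lra. rewrite <- ln_mult by nra. apply ln_le; auto.
    assert ((x+a)^2 <= (Rabs x + Rabs a)^2).
    { replace ((x+a)^2) with (Rabs (x+a) ^ 2) by apply pow2_abs.
      apply pow_incr. split. apply Rabs_pos. apply Rabs_triang. }
    assert (0 <= Rabs x * Rabs a) by nra. assert (0 <= Rabs x * t) by nra. assert (0 <= Rabs a * t) by nra.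
    assert (0 <= Rabs x * Rabs a * t) by nra.
    simpl in *. nra. }
  assert (Lo: 2 * ln t <= ln ((x + a) ^ 2 + t ^ 2)).
  { rewrite <- ln_sq2 by lra. apply ln_le. nra. simpl. pose proof (pow2_ge_0 (x+a)). simpl in *; lra. }
  pose proof (ln_le_2phi x).
  assert (R1: Rabs (ln t) + Rabs (ln (1 + Rabs a + t)) + 2 * phi x <= (Rabs (ln t) + Rabs (ln (1 + Rabs a + t)) + 2) * phi x).
  { pose proof (Rabs_pos (ln t)); pose proof (Rabs_pos (ln (1 + Rabs a + t))); nra. }
  apply Rle_trans with (Rabs (ln t) + Rabs (ln (1 + Rabs a + t)) + 2 * phi x); auto.
  apply Rabs_le. split_Rabs; lra.
Qed.

Lemma fL_exists a t : 0 < t -> exists L, imp (fL a t) L.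
Proof.
  intros Ht. apply (imp_dom _ (fun x => (Rabs (ln t) + Rabs (ln (1 + Rabs a + t)) + 2) * phid x)
     ((Rabs (ln t) + Rabs (ln (1 + Rabs a + t)) + 2) * Cphi)).
  - apply cont_ex; intros; apply fL_cont; auto.
  - apply imp_scal, imp_Cphi.
  - intros; apply fL_bound; auto.
Qed.

Definition KL a t := epsilon (inhabits 0) (fun L => imp (fL a t) L).
Lemma imp_KL a t : 0 < t -> imp (fL a t) (KL a t).
Proof. intros Ht. unfold KL. apply epsilon_spec. apply fL_exists; auto. Qed.

Lemma limp_bound F L X0 C : 0 < X0 -> (forall x, X0 < x -> Rabs (F x - L) <= C / x) -> limp F L.
Proof.
  intros HX H eps He. exists (Rmax X0 (Rabs C / eps)). intros x Hx.
  pose proof (Rmax_l X0 (Rabs C / eps)). pose proof (Rmax_r X0 (Rabs C / eps)).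
  assert (xp: 0 < x) by lra. specialize (H x ltac:(lra)).
  apply Rle_lt_trans with (C / x); auto.
  assert (Hc: Rabs C < eps * x).
  { assert (Rabs C / eps < x) by lra.
    replace (Rabs C) with (eps * (Rabs C / eps)) by (field; lra).
    apply Rmult_lt_compat_l; auto. }
  pose proof (Rle_abs C).
  unfold Rdiv. apply (Rmult_lt_reg_r x); auto. rewrite Rmult_assoc, Rinv_l, Rmult_1_r by lra. lra.
Qed.

Lemma limm_bound F L X0 C : 0 < X0 -> (forall x, x < - X0 -> Rabs (F x - L) <= C / (- x)) -> limm F L.
Proof.
  intros HX H. apply limm_of_limp. apply (limp_bound _ _ X0 C); auto.
  intros x Hx. replace x with (- - x) at 2 by ring. apply H. lra.
Qed.

Lemma ln_ratio_abs u v m : 0 < m -> m <= u -> m <= v -> Rabs (ln (u / v)) <= Rabs (u - v) / m.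
Proof.
  intros Hm Hu Hv.
  assert (A: ln (u / v) <= (u - v) / v).
  { pose proof (ln_le_sub1 (u/v) ltac:(apply Rdiv_lt_0_compat; lra)).
    replace ((u - v) / v) with (u / v - 1) by (field; lra). auto. }
  assert (B: (u - v) / u <= ln (u / v)).
  { replace (u / v) with (/ (v / u)) by (field; lra). rewrite ln_Rinv by (apply Rdiv_lt_0_compat; lra).
    pose proof (ln_le_sub1 (v/u) ltac:(apply Rdiv_lt_0_compat; lra)).
    replace ((u - v) / u) with (- (v / u - 1)) by (field; lra). lra. }
  assert (C: Rabs (u - v) / v <= Rabs (u - v) / m).
  { apply div_le_div; try lra. pose proof (Rabs_pos (u - v)). nra. }
  assert (D: Rabs (u - v) / u <= Rabs (u - v) / m).
  { apply div_le_div; try lra. pose proof (Rabs_pos (u - v)). nra. }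
  assert ((u - v) / v <= Rabs (u - v) / v) by (unfold Rdiv; apply Rmult_le_compat_r; [left; apply Rinv_0_lt_compat; lra| apply Rle_abs]).
  assert (- (Rabs (u - v) / u) <= (u - v) / u).
  { unfold Rdiv. replace (-(Rabs (u-v) * /u)) with ((-Rabs(u-v)) * /u) by ring.
    apply Rmult_le_compat_r; [left; apply Rinv_0_lt_compat; lra|].
    pose proof (Rabs_def2b (u-v) (Rabs (u-v)) (Rle_refl _)). lra. }
  apply Rabs_le; lra.
Qed.

Definition Lr a t x := ln ((1 + x^2) / ((x+a)^2 + t^2)).

Lemma Lr_bound a t x : 0 < t -> 2 * Rabs a + 1 < Rabs x ->
  Rabs (Lr a t x) <= 4 * (1 + a^2 + t^2 + 2 * Rabs a) / Rabs x.
Proof.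
  intros Ht Hx. unfold Lr. pose proof (Rabs_pos a).
  assert (Hx0: 0 < Rabs x) by lra.
  assert (E2: x^2 = Rabs x ^ 2) by (rewrite pow2_abs; auto).
  assert (Hva: (Rabs x / 2)^2 <= (x + a)^2).
  { rewrite <- (pow2_abs (x+a)). apply pow_incr. split. lra.
    pose proof (Rabs_triang_inv x (-a)). rewrite Rabs_Ropp in H0.
    replace (x - - a) with (x + a) in H0 by ring. lra. }
  assert (Ht2: 0 < t^2) by (apply pow_lt; lra).
  eapply Rle_trans. apply (ln_ratio_abs _ _ ((Rabs x/2)^2)).
  - apply pow_lt; lra.
  - rewrite E2. simpl; nra.
  - lra.
  - replace (1 + x^2 - ((x+a)^2 + t^2)) with (1 - 2*a*x - a^2 - t^2) by ring.
    apply Rle_trans with ((1 + a^2 + t^2 + 2 * Rabs a * Rabs x) / (Rabs x / 2) ^ 2).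
    + unfold Rdiv. apply Rmult_le_compat_r. left; apply Rinv_0_lt_compat, pow_lt; lra.
      apply Rabs_le. assert (Rabs (2 * a * x) <= 2 * Rabs a * Rabs x) by (rewrite !Rabs_mult, Rabs_pos_eq by lra; lra).
      apply Rabs_def2b in H0. pose proof (pow2_ge_0 a); pose proof (pow2_ge_0 t). lra.
    + apply div_le_div. apply pow_lt; lra. lra.
      assert (0 <= Rabs a * Rabs x) by nra. assert (1 <= Rabs x) by lra.
      pose proof (pow2_ge_0 a); pose proof (pow2_ge_0 t).
      simpl. nra.
Qed.

Lemma limp_Lr a t : 0 < t -> limp (Lr a t) 0.
Proof.
  intros Ht. apply (limp_bound _ _ (2 * Rabs a + 1) (4 * (1 + a^2 + t^2 + 2 * Rabs a))).
  pose proof (Rabs_pos a); lra.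
  intros x Hx. rewrite Rminus_0_r. pose proof (Rabs_pos a).
  rewrite <- (Rabs_pos_eq x) at 2 by lra. apply Lr_bound; auto. rewrite (Rabs_pos_eq x); lra.
Qed.

Lemma limm_Lr a t : 0 < t -> limm (Lr a t) 0.
Proof.
  intros Ht. apply (limm_bound _ _ (2 * Rabs a + 1) (4 * (1 + a^2 + t^2 + 2 * Rabs a))).
  pose proof (Rabs_pos a); lra.
  intros x Hx. rewrite Rminus_0_r. pose proof (Rabs_pos a).
  replace (- x) with (Rabs x) by (rewrite (Rabs_left x); lra). apply Lr_bound; auto. rewrite (Rabs_left x); lra.
Qed.

Lemma limp_atan_aff a t : 0 < t -> limp (fun x => atan ((x + a) / t)) (PI/2).
Proof.
  intros Ht. apply (limp_comp atan (fun x => (x + a)/t)). apply limp_atan.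
  intros M. exists (M * t - a). intros x Hx. apply Rmult_lt_reg_r with t; auto.
  unfold Rdiv; rewrite Rmult_assoc, Rinv_l, Rmult_1_r; lra.
Qed.

Lemma limm_atan_aff a t : 0 < t -> limm (fun x => atan ((x + a) / t)) (-(PI/2)).
Proof.
  intros Ht. apply (limm_comp atan (fun x => (x + a)/t)). apply limm_atan.
  intros M. exists (M * t + a). intros x Hx. apply Rmult_lt_reg_r with t; auto.
  unfold Rdiv; rewrite Rmult_assoc, Rinv_l, Rmult_1_r; lra.
Qed.

Lemma f1L_cont a t x : 0 < t -> continuous (f1L a t) x.
Proof.
  intros Ht. unfold f1L. apply (continuous_mult (fun x => t / ((x + a) ^ 2 + t ^ 2)) cauchy_density).
  - apply deriv_cont. auto_derive. pose proof (pow2_ge_0 (x+a)). assert (0 < t^2) by (apply pow_lt; lra).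
    simpl in *; lra.
  - apply dens_cont.
Qed.

Lemma imp_f1L a t : 0 < t -> imp (f1L a t) (psiL a t).
Proof.
  intros Ht. pose proof PI_RGT_0 as Hpi.
  destruct (Req_dec (4*a^2 + (a^2+t^2-1)^2) 0) as [HD|HD].
  - assert (a = 0 /\ t = 1) as [-> ->].
    { pose proof (pow2_ge_0 a); pose proof (pow2_ge_0 (a^2+t^2-1)).
      assert (H1: a^2 = 0) by lra. assert (a = 0) by (simpl in H1; nra).
      subst. assert (H2: (t^2-1)^2 = 0) by (simpl in *; lra).
      assert (H3: t^2 - 1 = 0) by (simpl in H2; nra). simpl in H3. split; auto. nra. }
    set (c := / (2 * PI)).
    replace (psiL 0 1) with (c * (0 + PI/2) - c * (0 + -(PI/2))).
    2: { unfold psiL, c. field. lra. }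
    apply (imp_antideriv (fun x => c * (x / (1 + x^2) + atan x))).
    + intros x. unfold c, f1L, cauchy_density. pose proof (pow2_ge_0 x). auto_derive.
      simpl in *; lra. simpl in *. field. lra.
    + intros; apply f1L_cont; lra.
    + apply limp_scal, limp_plus; [|apply limp_atan].
      apply (limp_bound _ _ 1 1); [lra|]. intros x Hx. rewrite Rminus_0_r.
      rewrite Rabs_pos_eq by (apply Rmult_le_pos; [lra| left; apply Rinv_0_lt_compat; nra]).
      apply div_le_div; nra.
    + apply limm_scal, limm_plus; [|apply limm_atan].
      apply (limm_bound _ _ 1 1); [lra|]. intros x Hx. rewrite Rminus_0_r.
      unfold Rdiv. rewrite Rabs_mult, Rabs_inv, (Rabs_left x) by lra.
      rewrite (Rabs_pos_eq (1 + x^2)) by nra.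
      apply div_le_div; nra.
  - set (D := 4*a^2 + (a^2+t^2-1)^2) in *.
    set (p := -2*a/D). set (q := (a^2+t^2-1)/D). set (w := 1 - (a^2+t^2-1)*(a^2+t^2)/D).
    set (c1 := /PI * t * (p/2)). set (c2 := /PI * t * q). set (c3 := /PI * (w + p*a)).
    replace (psiL a t) with ((c1 * 0 + c2 * (PI/2) + c3 * (PI/2)) - (c1 * 0 + c2 * (-(PI/2)) + c3 * (-(PI/2)))).
    2: { unfold c1, c2, c3, p, q, w, psiL, D. field.
         pose proof (pow2_ge_0 a). assert (0 < (t+1)^2) by (apply pow_lt; lra). split; [lra|split; [exact HD|lra]]. }
    apply (imp_antideriv (fun x => c1 * Lr a t x + c2 * atan x + c3 * atan ((x + a) / t))).
    + intros x. unfold c1, c2, c3, Lr, f1L, cauchy_density.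
      pose proof (pow2_ge_0 (x+a)); pose proof (pow2_ge_0 x); assert (0 < t^2) by (apply pow_lt; lra).
      assert (0 < (x+a)^2+t^2) by lra. assert (0 < 1 + x^2) by lra.
      auto_derive. { simpl in *. repeat split; try lra. apply Rmult_lt_0_compat; [lra | apply Rinv_0_lt_compat; lra]. }
      unfold p, q, w, D in *. simpl in *. field. repeat split; try lra.
    + intros; apply f1L_cont; lra.
    + apply limp_plus. apply limp_plus. apply limp_scal, limp_Lr; auto.
      apply limp_scal, limp_atan. apply limp_scal, limp_atan_aff; auto.
    + apply limm_plus. apply limm_plus. apply limm_scal, limm_Lr; auto.
      apply limm_scal, limm_atan. apply limm_scal, limm_atan_aff; auto.
Qed.

Lemma KL_deriv a t : 0 < t -> is_derive (KL a) t (psiL a t).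
Proof.
  intros Ht.
  apply (deriv_under (fL a) (f1L a) (f2L a) (KL a) (psiL a) (fun x => / ((t/2)^2) * cauchy_density x)
           (/ ((t/2)^2) * 1) (t/2)); auto; try lra.
  - intros s x Hs. unfold fL, f1L. pose proof (pow2_ge_0 (x+a)). assert (0 < s^2) by (apply pow_lt; lra).
    auto_derive. simpl in *; lra. simpl in *; field. lra.
  - intros s x Hs. unfold f1L, f2L. pose proof (pow2_ge_0 (x+a)). assert (0 < s^2) by (apply pow_lt; lra).
    auto_derive. simpl in *; lra. simpl in *; field. lra.
  - intros s x Hs. unfold f2L. pose proof (dens_pos x). pose proof (pow2_ge_0 (x+a)).
    assert (0 < s^2) by (apply pow_lt; lra).
    assert (Hq: 0 < (x + a) ^ 2 + s ^ 2) by lra.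
    rewrite Rabs_mult, (Rabs_pos_eq (cauchy_density x)) by lra.
    apply Rmult_le_compat_r; [lra|].
    unfold Rdiv; rewrite Rabs_mult, Rabs_inv, (Rabs_pos_eq (((x + a) ^ 2 + s ^ 2) ^ 2)) by (apply pow2_ge_0).
    apply Rle_trans with (/ ((x + a) ^ 2 + s ^ 2)).
    + apply Rmult_le_reg_r with (((x + a) ^ 2 + s ^ 2) ^ 2). apply pow_lt; lra.
      rewrite Rmult_assoc, Rinv_l by (apply pow_nonzero; lra).
      replace (/ ((x + a) ^ 2 + s ^ 2) * ((x + a) ^ 2 + s ^ 2) ^ 2) with ((x + a) ^ 2 + s ^ 2) by (field; lra).
      rewrite Rmult_1_r. apply Rabs_le; lra.
    + apply Rinv_le_contravar. apply pow_lt; lra.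
      assert ((t/2)^2 <= s^2) by (apply pow_incr; lra). lra.
  - apply imp_scal, imp_dens.
  - intros s Hs; apply imp_KL; lra.
  - intros s Hs; apply imp_f1L; lra.
Qed.

Lemma TL_deriv a t : 0 < t -> is_derive (TL a) t (psiL a t).
Proof.
  intros Ht. unfold TL, psiL. pose proof (pow2_ge_0 a). assert (0 < (t+1)^2) by (apply pow_lt; lra).
  auto_derive. simpl in *; lra. simpl in *; field. lra.
Qed.

Lemma KL_TL_const a t1 t2 : 0 < t1 -> 0 < t2 -> KL a t1 - TL a t1 = KL a t2 - TL a t2.
Proof.
  intros H1 H2.
  destruct (MVT_gen (fun s => KL a s - TL a s) t1 t2 (fun _ => 0)) as [c [_ E]].
  - intros x Hx. replace 0 with (psiL a x - psiL a x) by ring.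
    assert (0 < x) by (unfold Rmin in Hx; destruct Rle_dec; lra).
    apply (is_derive_minus (KL a) (TL a)). apply KL_deriv; auto. apply TL_deriv; auto.
  - intros x Hx. assert (0 < x) by (unfold Rmin in Hx; destruct Rle_dec; lra).
    apply derive_contpt with (psiL a x - psiL a x).
    apply (is_derive_minus (KL a) (TL a)). apply KL_deriv; auto. apply TL_deriv; auto.
  - simpl in E. lra.
Qed.

Lemma KL_near_ln a t : 1 <= t -> Rabs (KL a t - ln t) <= 2 * sqrt (1 + Rabs a) / sqrt t * Cphi.
Proof.
  intros Ht.
  assert (I: imp (fun x => fL a t x - ln t * cauchy_density x) (KL a t - ln t * 1)).
  { apply imp_minus. apply imp_KL; lra. apply imp_scal, imp_dens. }
  rewrite Rmult_1_r in I.
  apply (imp_abs_le _ (fun x => 2 * sqrt (1 + Rabs a) / sqrt t * phid x) _ _ I).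
  { apply imp_scal, imp_Cphi. }
  intros x. unfold fL, phid. pose proof (dens_pos x).
  replace (/ 2 * ln ((x + a) ^ 2 + t ^ 2) * cauchy_density x - ln t * cauchy_density x)
    with ((/ 2 * ln ((x + a) ^ 2 + t ^ 2) - ln t) * cauchy_density x) by ring.
  rewrite Rabs_mult, (Rabs_pos_eq (cauchy_density x)) by lra.
  replace (2 * sqrt (1 + Rabs a) / sqrt t * (phi x * cauchy_density x))
    with ((2 * sqrt (1 + Rabs a) / sqrt t * phi x) * cauchy_density x) by ring.
  apply Rmult_le_compat_r; [lra|].
  set (z := Rabs (x + a) / t).
  assert (Hz: 0 <= z) by (unfold z; apply Rmult_le_pos; [apply Rabs_pos| left; apply Rinv_0_lt_compat; lra]).
  assert (E: (x + a) ^ 2 + t ^ 2 = (t * t) * (1 + z * z)).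
  { unfold z. rewrite <- (pow2_abs (x+a)). field. lra. }
  assert (E2: / 2 * ln ((x + a) ^ 2 + t ^ 2) - ln t = / 2 * ln (1 + z * z)).
  { rewrite E, ln_mult, ln_sq2 by nra. field. }
  rewrite E2. pose proof (ln_sq_bound z Hz).
  assert (0 <= ln (1 + z * z)) by (rewrite <- ln_1; apply ln_le; nra).
  rewrite Rabs_pos_eq by lra.
  apply Rle_trans with (2 * sqrt z); [lra|].
  unfold z. rewrite sqrt_div_alt by lra.
  assert (0 < sqrt t) by (apply sqrt_lt_R0; lra).
  assert (Hk: sqrt (Rabs (x + a)) <= sqrt (1 + Rabs a) * phi x).
  { unfold phi. rewrite <- sqrt_mult_alt by (pose proof (Rabs_pos a); lra).
    apply sqrt_le_1_alt. pose proof (Rabs_triang x a). pose proof (Rabs_pos x). pose proof (Rabs_pos a).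
    nra. }
  replace (2 * sqrt (1 + Rabs a) / sqrt t * phi x) with (2 * ((sqrt (1 + Rabs a) * phi x) / sqrt t)) by (field; lra).
  apply Rmult_le_compat_l; [lra|]. unfold Rdiv. apply Rmult_le_compat_r; auto.
  left; apply Rinv_0_lt_compat; auto.
Qed.

Lemma TL_near_ln a t : 1 <= t -> Rabs (TL a t - ln t) <= (a^2 + 3) / 2 / t.
Proof.
  intros Ht. unfold TL.
  set (w := (a^2 + 2*t + 1) / (t*t)).
  assert (Hw: 0 <= w) by (unfold w; apply Rmult_le_pos; [pose proof (pow2_ge_0 a); lra| left; apply Rinv_0_lt_compat; nra]).
  assert (E: a^2 + (t+1)^2 = (t*t) * (1 + w)) by (unfold w; field; lra).
  rewrite E, ln_mult, ln_sq2 by nra.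
  replace (/ 2 * (2 * ln t + ln (1 + w)) - ln t) with (/2 * ln (1 + w)) by field.
  pose proof (ln_1p_le w Hw). assert (0 <= ln (1 + w)) by (rewrite <- ln_1; apply ln_le; lra).
  rewrite Rabs_pos_eq by lra.
  apply Rle_trans with (/2 * w); [lra|]. unfold w.
  apply Rle_trans with (/2 * ((a^2 + 3) / t)).
  { apply Rmult_le_compat_l; [lra|]. pose proof (pow2_ge_0 a). apply div_le_div; nra. }
  right; field; lra.
Qed.

Lemma L0 a t : 0 < t ->
  imp (fun x => / 2 * ln ((x + a) ^ 2 + t ^ 2) * cauchy_density x) (/ 2 * ln (a ^ 2 + (t + 1) ^ 2)).
Proof.
  intros Ht. fold (TL a t). change (imp (fL a t) (TL a t)).
  replace (TL a t) with (KL a t). apply imp_KL; auto.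
  set (c := KL a t - TL a t).
  set (A := 2 * sqrt (1 + Rabs a) * Rabs Cphi). set (B := (a^2+3)/2).
  assert (HA: 0 <= A) by (unfold A; pose proof (sqrt_pos (1 + Rabs a)); pose proof (Rabs_pos Cphi); nra).
  assert (HB: 0 <= B) by (unfold B; pose proof (pow2_ge_0 a); lra).
  assert (Bnd: forall s, 1 <= s -> Rabs c <= (A + B) / sqrt s).
  { intros s Hs. unfold c. rewrite (KL_TL_const a t s) by lra.
    pose proof (KL_near_ln a s Hs). pose proof (TL_near_ln a s Hs).
    assert (Hss: 1 <= sqrt s) by (rewrite <- sqrt_1; apply sqrt_le_1_alt; lra).
    assert (2 * sqrt (1 + Rabs a) / sqrt s * Cphi <= A / sqrt s).
    { replace (A / sqrt s) with (2 * sqrt (1 + Rabs a) / sqrt s * Rabs Cphi) by (unfold A; field; lra).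
      apply Rmult_le_compat_l. 2: apply Rle_abs.
      pose proof (sqrt_pos (1 + Rabs a)). apply Rmult_le_pos; [lra| left; apply Rinv_0_lt_compat; lra]. }
    assert (B / s <= B / sqrt s).
    { apply div_le_div; try lra. pose proof (sqrt_sqrt s ltac:(lra)). assert (sqrt s <= s) by nra. apply Rmult_le_compat_l; lra. }
    replace ((a ^ 2 + 3) / 2 / s) with (B / s) in H0 by (unfold B; field; lra).
    replace (KL a s - TL a s) with ((KL a s - ln s) - (TL a s - ln s)) by ring.
    eapply Rle_trans. apply Rabs_triang. rewrite Rabs_Ropp.
    replace ((A + B) / sqrt s) with (A / sqrt s + B / sqrt s) by (field; lra). lra. }
  destruct (Req_dec c 0) as [H0|Hn]; [unfold c in H0; lra|].
  exfalso. assert (Hc: 0 < Rabs c) by (apply Rabs_pos_lt; auto).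
  set (s := Rmax 1 ((2 * (A + B) / Rabs c) ^ 2)).
  assert (Hs1: 1 <= s) by apply Rmax_l.
  specialize (Bnd s Hs1).
  assert (Hs2: 2 * (A + B) / Rabs c <= sqrt s).
  { rewrite <- (sqrt_pow2 (2 * (A + B) / Rabs c)).
    apply sqrt_le_1_alt. apply Rmax_r. apply Rmult_le_pos; [lra| left; apply Rinv_0_lt_compat; lra]. }
  assert (Hsq: 0 < sqrt s) by (apply sqrt_lt_R0; lra).
  assert ((A + B) / sqrt s <= Rabs c / 2).
  { assert (2*(A+B) <= Rabs c * sqrt s).
    { replace (2*(A+B)) with (Rabs c * (2*(A+B)/Rabs c)) by (field; lra). apply Rmult_le_compat_l; lra. }
    apply div_le_div; lra. }
  lra.
Qed.

(* complex numbers as pairs *)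
Definition cn2 (z : R * R) := fst z ^ 2 + snd z ^ 2.
Definition lnm (z : R * R) := / 2 * ln (cn2 z).

Lemma Lcx p1 p2 q1 q2 : 0 < p1^2 + p2^2 -> 0 < q2 * p1 - q1 * p2 ->
  imp (fun x => lnm (p1 * x + q1, p2 * x + q2) * cauchy_density x) (lnm (q1 - p2, q2 + p1)).
Proof.
  intros Hn Hb. assert (Hn': p1^2 + p2^2 <> 0) by lra. set (n := p1^2 + p2^2) in *.
  set (a := (p1 * q1 + p2 * q2) / n). set (b := (q2 * p1 - q1 * p2) / n).
  assert (Hbp: 0 < b) by (unfold b; apply Rdiv_lt_0_compat; auto).
  pose proof (L0 a b Hbp) as HL.
  pose proof (imp_scal (/2 * ln n) _ _ imp_dens) as HD.
  pose proof (imp_plus _ _ _ _ HD HL) as HS.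
  assert (E1: forall x, cn2 (p1 * x + q1, p2 * x + q2) = n * ((x + a)^2 + b^2)).
  { intros x. unfold cn2, a, b, n; simpl. field. unfold n in Hn; simpl in Hn; lra. }
  assert (E2: cn2 (q1 - p2, q2 + p1) = n * (a^2 + (b + 1)^2)).
  { unfold cn2, a, b, n; simpl. field. unfold n in Hn; simpl in Hn; lra. }
  eapply imp_ext; [|replace (lnm (q1 - p2, q2 + p1)) with (/ 2 * ln n * 1 + / 2 * ln (a ^ 2 + (b + 1) ^ 2)); [exact HS|]].
  - intros x. cbv beta. unfold lnm. rewrite E1. rewrite ln_mult; auto.
    ring. pose proof (pow2_ge_0 (x+a)). assert (0 < b^2) by (apply pow_lt; lra). lra.
  - unfold lnm. rewrite E2, ln_mult; auto. ring.
    pose proof (pow2_ge_0 a). assert (0 < (b+1)^2) by (apply pow_lt; lra). lra.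
Qed.

Lemma ce_last n : forall F H L,
  (forall xs, improper_int (fun x => F (xs ++ [x]) * cauchy_density x) (H xs)) ->
  cauchy_expect n H L -> cauchy_expect (S n) F L.
Proof.
  induction n as [|m IH]; intros F H L HF HH.
  - simpl in HH. subst L. simpl. exists (fun x => F [x]). split.
    + intros x. simpl. reflexivity.
    + apply (HF []).
  - destruct HH as [g [Hg Hi]]. exists g. split; auto.
    intros x. apply (IH (fun xs => F (x :: xs)) (fun xs => H (x :: xs))); auto.
    intros xs. apply (HF (x :: xs)).
Qed.

Lemma ce_mono n : forall F G a b d, cauchy_expect n F a -> cauchy_expect n G b ->
  (forall xs, F xs <= G xs + d) -> a <= b + d.
Proof.
  induction n as [|m IH]; intros F G a b d HF HG Hle.
  - simpl in *. subst. auto.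
  - destruct HF as [gF [HgF HiF]]. destruct HG as [gG [HgG HiG]].
    assert (Hx: forall x, gF x <= gG x + d).
    { intros x. apply (IH (fun xs => F (x :: xs)) (fun xs => G (x :: xs))); auto. }
    apply improper_imp in HiF. apply improper_imp in HiG.
    replace (b + d) with (b + d * 1) by ring.
    apply (imp_le _ (fun x => gG x * cauchy_density x + d * cauchy_density x) _ _ HiF).
    apply imp_plus; auto. apply imp_scal, imp_dens.
    intros x. pose proof (dens_pos x). specialize (Hx x). nra.
Qed.

Definition det (A : mat2) := m11 A * m22 A - m12 A * m21 A.

Lemma mat2_eq A B : m11 A = m11 B -> m12 A = m12 B -> m21 A = m21 B -> m22 A = m22 B -> A = B.
Proof. destruct A, B; simpl; intros; subst; auto. Qed.

Lemma mul_assoc A B C : mat2_mul A (mat2_mul B C) = mat2_mul (mat2_mul A B) C.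
Proof. apply mat2_eq; destruct A, B, C; simpl; ring. Qed.

Lemma mul_id_r A : mat2_mul A mat2_id = A.
Proof. apply mat2_eq; destruct A; simpl; ring. Qed.
Lemma mul_id_l A : mat2_mul mat2_id A = A.
Proof. apply mat2_eq; destruct A; simpl; ring. Qed.

Lemma det_mul A B : det (mat2_mul A B) = det A * det B.
Proof. destruct A, B; unfold det; simpl; ring. Qed.

Lemma fold_gen xi l : forall A,
  fold_left (fun acc e => mat2_mul (Ymat xi e) acc) l A = mat2_mul (Sprod xi l) A.
Proof.
  induction l as [|e l IH]; intros A.
  - simpl. unfold Sprod; simpl. rewrite mul_id_l; auto.
  - unfold Sprod. simpl. rewrite IH. rewrite (IH (mat2_mul (Ymat xi e) mat2_id)).
    rewrite mul_id_r, mul_assoc. auto.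
Qed.

Lemma Sprod_nil xi : Sprod xi [] = mat2_id.
Proof. reflexivity. Qed.

Lemma Sprod_snoc xi l x : Sprod xi (l ++ [x]) = mat2_mul (Ymat xi x) (Sprod xi l).
Proof. unfold Sprod at 1. rewrite fold_left_app. simpl. reflexivity. Qed.

Lemma Sprod_mid xi pre x rest :
  Sprod xi (pre ++ x :: rest) = mat2_mul (Sprod xi rest) (mat2_mul (Ymat xi x) (Sprod xi pre)).
Proof. unfold Sprod at 1. rewrite fold_left_app. simpl. rewrite fold_gen. auto. Qed.

Lemma det_Sprod xi l : det (Sprod xi l) = 1.
Proof.
  induction l as [|x l IH] using rev_ind.
  - unfold det; simpl; ring.
  - rewrite Sprod_snoc, det_mul, IH. unfold det, Ymat; simpl; ring.
Qed.

Definition gam xi := (Rabs xi + sqrt (xi^2+4))/2.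
Definition sg xi := xi / Rabs xi.
Definition sig xi := sg xi / gam xi.

Section Consts.
Variable xi : R.
Hypothesis hxi : xi <> 0.

Lemma gam_pos : 0 < gam xi.
Proof.
  unfold gam. pose proof (Rabs_pos xi). assert (0 < sqrt (xi^2+4)) by (apply sqrt_lt_R0; pose proof (pow2_ge_0 xi); lra). lra.
Qed.

Lemma gam_eq : gam xi * gam xi = Rabs xi * gam xi + 1.
Proof.
  unfold gam. pose proof (sqrt_sqrt (xi^2+4) ltac:(pose proof (pow2_ge_0 xi); lra)).
  assert (Rabs xi * Rabs xi = xi^2) by (rewrite <- pow2_abs; simpl; ring). nra.
Qed.

Lemma sg_cases : (sg xi = 1 /\ Rabs xi = xi) \/ (sg xi = -1 /\ Rabs xi = - xi).
Proof.
  unfold sg. destruct (Rle_or_lt 0 xi).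
  - left. rewrite Rabs_pos_eq by lra. split; auto. field; auto.
  - right. rewrite Rabs_left by lra. split; auto. field; auto.
Qed.

Lemma sig_ne0 : sig xi <> 0.
Proof.
  unfold sig, Rdiv. pose proof gam_pos. apply Rmult_integral_contrapositive_currified.
  destruct sg_cases as [[-> _]|[-> _]]; lra. apply Rinv_neq_0_compat; lra.
Qed.

Lemma xi_sig_pos : 0 < xi * sig xi.
Proof.
  unfold sig. pose proof gam_pos. destruct sg_cases as [[-> E]|[-> E]].
  - assert (0 < xi) by (pose proof (Rabs_pos_lt xi hxi); lra).
    unfold Rdiv; apply Rmult_lt_0_compat; auto; apply Rmult_lt_0_compat; [lra|apply Rinv_0_lt_compat; lra].
  - assert (xi < 0) by (pose proof (Rabs_pos_lt xi hxi); lra).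
    replace (xi * (-1 / gam xi)) with ((-xi) * / gam xi) by (field; lra).
    apply Rmult_lt_0_compat; [lra|apply Rinv_0_lt_compat; lra].
Qed.

Lemma key_identity a1 a2 b1 b2 :
  (b1 - xi * a2 - sig xi * a2)^2 + (b2 + xi * a1 + sig xi * a1)^2 =
  gam xi ^ 2 * ((a1 + sig xi * b2)^2 + (a2 - sig xi * b1)^2).
Proof.
  pose proof gam_pos. pose proof gam_eq as G. unfold sig.
  destruct sg_cases as [[-> E]|[-> E]]; rewrite E in G; set (g := gam xi) in *; clearbody g.
  - assert (Ex: xi = g - / g).
    { apply Rmult_eq_reg_r with g; [|lra]. rewrite Rmult_minus_distr_r, Rinv_l by lra. lra. }
    rewrite Ex. field. lra.
  - assert (Ex: xi = - (g - / g)).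
    { apply Rmult_eq_reg_r with g; [|lra]. rewrite Ropp_mult_distr_l_reverse, Rmult_minus_distr_r, Rinv_l by lra. lra. }
    rewrite Ex. field. lra.
Qed.

End Consts.

Definition Uv xi (S : mat2) : R * R := (m11 S, - sig xi * m12 S).
Definition Uw xi (S : mat2) : R * R := (m21 S, - sig xi * m22 S).
Definition cmul (z w : R * R) : R * R := (fst z * fst w - snd z * snd w, fst z * snd w + snd z * fst w).
Definition cadd (z w : R * R) : R * R := (fst z + fst w, snd z + snd w).
Definition Gf xi (al be : R * R) (l : list R) :=
  lnm (cadd (cmul al (Uv xi (Sprod xi l))) (cmul be (Uw xi (Sprod xi l)))).
Definition ccst xi : R * R := (0, - sig xi).
Definition condab xi (al be : R * R) := 0 < cn2 al /\ 0 <= xi * (snd be * fst al - fst be * snd al).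

Lemma sq_pos_or a b : 0 < a^2 + b^2 \/ (a = 0 /\ b = 0).
Proof.
  destruct (Req_dec a 0) as [Ha|Ha]; destruct (Req_dec b 0) as [Hb|Hb]; auto;
  left; [assert (0 < b^2) by (apply pow2_gt_0; auto) | assert (0 < a^2) by (apply pow2_gt_0; auto)
        | assert (0 < a^2) by (apply pow2_gt_0; auto)]; pose proof (pow2_ge_0 a); pose proof (pow2_ge_0 b); lra.
Qed.

Lemma cnU_pos xi (hxi : xi <> 0) S : det S = 1 -> 0 < (m11 S)^2 + (- sig xi * m12 S)^2.
Proof.
  intros HS. destruct (sq_pos_or (m11 S) (- sig xi * m12 S)) as [|[H1 H2]]; auto.
  exfalso. pose proof (sig_ne0 xi hxi).
  assert (m12 S = 0).
  { apply Rmult_integral in H2. destruct H2; auto. lra. }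
  unfold det in HS. rewrite H1, H0 in HS. lra.
Qed.

Lemma ln_gam_mult xi (hxi : xi <> 0) X : 0 < X -> / 2 * ln (gam xi ^ 2 * X) = ln (gam xi) + / 2 * ln X.
Proof.
  intros HX. pose proof (gam_pos xi). rewrite ln_mult; [|apply pow_lt; lra|auto].
  replace (gam xi ^ 2) with (gam xi * gam xi) by ring. rewrite ln_mult by lra. field.
Qed.

Theorem T xi (hxi : xi <> 0) n : forall al be, condab xi al be ->
  cauchy_expect n (Gf xi al be) (INR n * ln (gam xi) + lnm (cadd al (cmul be (ccst xi)))).
Proof.
  induction n as [|n IH]; intros [a1 a2] [b1 b2] [Hal Hc]; unfold cn2 in Hal; simpl in Hal, Hc.
  - cbn [cauchy_expect]. unfold Gf, lnm. rewrite Sprod_nil. replace (INR 0) with 0 by reflexivity.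
    rewrite Rmult_0_l, Rplus_0_l. f_equal. f_equal.
    unfold cn2, cadd, cmul, Uv, Uw, ccst; simpl. ring.
  - set (al' := (b1 - xi * a2, b2 + xi * a1)). set (be' := (-a1, -a2)).
    apply ce_last with (H := Gf xi al' be').
    + intros xs. apply imp_improper.
      pose proof (det_Sprod xi xs) as HdS. pose proof (cnU_pos xi hxi _ HdS) as HU.
      set (S := Sprod xi xs) in *.
      set (u1 := m11 S) in *. set (u2 := - sig xi * m12 S) in *.
      set (w1 := m21 S). set (w2 := - sig xi * m22 S).
      set (p1 := xi * (a1 * u1 - a2 * u2)). set (p2 := xi * (a1 * u2 + a2 * u1)).
      set (q1 := (b1 * u1 - b2 * u2) - (a1 * w1 - a2 * w2)).
      set (q2 := (b1 * u2 + b2 * u1) - (a1 * w2 + a2 * w1)).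
      assert (Hp: 0 < p1^2 + p2^2).
      { replace (p1^2 + p2^2) with (xi^2 * ((a1^2 + a2^2) * (u1^2 + u2^2))) by (unfold p1, p2; ring).
        apply Rmult_lt_0_compat. apply pow2_gt_0; auto. apply Rmult_lt_0_compat; auto. }
      assert (Hq: 0 < q2 * p1 - q1 * p2).
      { replace (q2 * p1 - q1 * p2) with
          (xi * ((u1^2 + u2^2) * (b2 * a1 - b1 * a2)) + (xi * sig xi) * (a1^2 + a2^2) * det S).
        2: { unfold q1, q2, p1, p2, u1, u2, w1, w2, det. ring. }
        rewrite HdS. pose proof (xi_sig_pos xi hxi).
        assert (0 <= xi * ((u1 ^ 2 + u2 ^ 2) * (b2 * a1 - b1 * a2))).
        { replace (xi * ((u1 ^ 2 + u2 ^ 2) * (b2 * a1 - b1 * a2))) with ((u1 ^ 2 + u2 ^ 2) * (xi * (b2 * a1 - b1 * a2))) by ring.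
          apply Rmult_le_pos; lra. }
        assert (0 < xi * sig xi * (a1 ^ 2 + a2 ^ 2) * 1) by (rewrite Rmult_1_r; apply Rmult_lt_0_compat; lra).
        lra. }
      eapply imp_ext; [| replace (Gf xi al' be' xs) with (lnm (q1 - p2, q2 + p1)); [apply (Lcx p1 p2 q1 q2 Hp Hq)|]].
      * intros x. unfold Gf. rewrite Sprod_snoc. f_equal. unfold lnm. f_equal. f_equal.
        unfold cn2, cadd, cmul, Uv, Uw, Ymat; simpl. fold S.
        unfold p1, p2, q1, q2, u1, u2, w1, w2. ring.
      * unfold Gf. fold S. unfold lnm. f_equal. f_equal.
        unfold cn2, cadd, cmul, Uv, Uw, al', be'; simpl. fold u1 u2 w1 w2.
        unfold p1, p2, q1, q2. ring.
    + replace (INR (S n) * ln (gam xi) + lnm (cadd (a1, a2) (cmul (b1, b2) (ccst xi))))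
        with (INR n * ln (gam xi) + lnm (cadd al' (cmul be' (ccst xi)))).
      { apply IH. unfold condab, al', be', cn2; simpl. split.
        - destruct (sq_pos_or (b1 - xi * a2) (b2 + xi * a1)) as [|[E1 E2]]; auto.
          exfalso. assert (b1 = xi * a2) by lra. assert (b2 = - xi * a1) by lra. subst b1 b2.
          assert (xi * (- xi * a1 * a1 - xi * a2 * a2) = - xi^2 * (a1^2 + a2^2)) by ring.
          assert (0 < xi^2) by (apply pow2_gt_0; auto).
          assert (0 < xi^2 * (a1^2 + a2^2)) by (apply Rmult_lt_0_compat; lra). lra.
        - replace (xi * (- a2 * (b1 - xi * a2) - - a1 * (b2 + xi * a1)))
            with (xi * (b2 * a1 - b1 * a2) + xi^2 * (a1^2 + a2^2)) by ring.
          pose proof (pow2_ge_0 xi). assert (0 <= xi^2 * (a1^2 + a2^2)) by (apply Rmult_le_pos; lra). lra. }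
      rewrite S_INR. unfold lnm.
      assert (Ek: cn2 (cadd al' (cmul be' (ccst xi))) = gam xi ^ 2 * cn2 (cadd (a1, a2) (cmul (b1, b2) (ccst xi)))).
      { unfold cn2, cadd, cmul, ccst, al', be'; simpl.
        pose proof (key_identity xi hxi a1 a2 b1 b2) as K. lra. }
      assert (Hpos: 0 < cn2 (cadd (a1, a2) (cmul (b1, b2) (ccst xi)))).
      { unfold cn2, cadd, cmul, ccst; cbn [fst snd].
        match goal with |- 0 < ?A ^ 2 + ?B ^ 2 => destruct (sq_pos_or A B) as [|[E1 E2]]; [assumption|] end.
        exfalso. pose proof (xi_sig_pos xi hxi).
        assert (a1 = - sig xi * b2) by nra. assert (a2 = sig xi * b1) by nra. subst a1 a2.
        replace (xi * (b2 * (- sig xi * b2) - b1 * (sig xi * b1))) with (- (xi * sig xi) * (b1^2 + b2^2)) in Hc by ring.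
        destruct (sq_pos_or b1 b2) as [Hb|[-> ->]].
        - assert (0 < xi * sig xi * (b1^2 + b2^2)) by (apply Rmult_lt_0_compat; auto). lra.
        - simpl in Hal. lra. }
      rewrite Ek. rewrite ln_gam_mult by auto. ring.
Qed.

Definition E11 := Mat2 1 0 0 0.
Definition E12 := Mat2 0 1 0 0.
Definition E21 := Mat2 0 0 1 0.
Definition E22 := Mat2 0 0 0 1.

Section Norm.
Variable N : mat2 -> R.
Hypothesis hN : is_matrix_norm N.

Lemma N_pos A : 0 <= N A. Proof. destruct hN as [H _]; auto. Qed.
Lemma N_def A : N A = 0 -> A = mat2_zero. Proof. destruct hN as [_ [H _]]; auto. Qed.
Lemma N_scale c A : N (mat2_scale c A) = Rabs c * N A. Proof. destruct hN as [_ [_ [H _]]]; auto. Qed.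
Lemma N_add A B : N (mat2_add A B) <= N A + N B. Proof. destruct hN as [_ [_ [_ [H _]]]]; auto. Qed.
Lemma N_mul A B : N (mat2_mul A B) <= N A * N B. Proof. destruct hN as [_ [_ [_ [_ H]]]]; auto. Qed.

Lemma N_posdef A : A <> mat2_zero -> 0 < N A.
Proof. intros H. destruct (N_pos A) as [|E]; auto. symmetry in E. apply N_def in E. contradiction. Qed.

Definition Kn := N E11 + N E12 + N E21 + N E22.

Lemma N_E11_pos : 0 < N E11.
Proof. apply N_posdef. unfold E11, mat2_zero. intro H; inversion H; lra. Qed.
Lemma N_E22_pos : 0 < N E22.
Proof. apply N_posdef. unfold E22, mat2_zero. intro H; inversion H; lra. Qed.

Lemma Kn_pos : 0 < Kn.
Proof. unfold Kn. pose proof N_E11_pos. pose proof (N_pos E12). pose proof (N_pos E21). pose proof N_E22_pos. lra. Qed.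

Lemma N_upper A : N A <= Kn * (Rabs (m11 A) + Rabs (m12 A) + Rabs (m21 A) + Rabs (m22 A)).
Proof.
  assert (E: A = mat2_add (mat2_add (mat2_scale (m11 A) E11) (mat2_scale (m12 A) E12))
                          (mat2_add (mat2_scale (m21 A) E21) (mat2_scale (m22 A) E22))).
  { apply mat2_eq; destruct A; simpl; ring. }
  rewrite E at 1. eapply Rle_trans. apply N_add.
  eapply Rle_trans. apply Rplus_le_compat; apply N_add.
  rewrite !N_scale. unfold Kn.
  pose proof (N_pos E11). pose proof (N_pos E12). pose proof (N_pos E21). pose proof (N_pos E22).
  pose proof (Rabs_pos (m11 A)). pose proof (Rabs_pos (m12 A)). pose proof (Rabs_pos (m21 A)). pose proof (Rabs_pos (m22 A)).
  nra.
Qed.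

Lemma N_mul3 A B C : N (mat2_mul (mat2_mul A B) C) <= N A * N B * N C.
Proof.
  eapply Rle_trans. apply N_mul. apply Rmult_le_compat_r. apply N_pos. apply N_mul.
Qed.

Lemma abs_sum_sq a b : (Rabs a + Rabs b)^2 <= 2 * (a^2 + b^2).
Proof.
  rewrite <- (pow2_abs a), <- (pow2_abs b). pose proof (pow2_ge_0 (Rabs a - Rabs b)). nra.
Qed.

Lemma row_bound_gen A M E a b : 0 < N E -> mat2_mul (mat2_mul E A) M = E ->
  0 < a^2 + b^2 -> N M <= Kn * ((Rabs a + Rabs b) / (a^2 + b^2)) ->
  Rabs a + Rabs b <= 2 * Kn * N A.
Proof.
  intros HE HEq HR HM. set (r2 := a^2 + b^2) in *.
  pose proof (N_mul3 E A M) as H. rewrite HEq in H.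
  assert (H1: 1 <= N A * N M).
  { apply Rmult_le_reg_l with (N E); auto. lra. }
  pose proof (abs_sum_sq a b) as H2. fold r2 in H2.
  pose proof (N_pos A). pose proof Kn_pos. pose proof (Rabs_pos a). pose proof (Rabs_pos b).
  set (s := Rabs a + Rabs b) in *.
  assert (1 <= N A * (Kn * (s / r2))) by (eapply Rle_trans; [exact H1|]; apply Rmult_le_compat_l; auto).
  assert (r2 <= N A * Kn * s).
  { apply Rmult_le_reg_r with (/ r2). apply Rinv_0_lt_compat; auto.
    rewrite Rinv_r by lra. replace (N A * Kn * s * / r2) with (N A * (Kn * (s / r2))) by (field; lra). lra. }
  assert (0 <= s) by (unfold s; lra). destruct (Req_dec s 0) as [Hs0|Hs0]. { rewrite Hs0. apply Rmult_le_pos; lra. }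
  assert (0 < s) by lra.
  apply Rmult_le_reg_r with s; auto. simpl in H2. nra.
Qed.

Lemma abs_div_sum a b r : 0 < r -> Rabs (a / r) + Rabs (b / r) = (Rabs a + Rabs b) / r.
Proof.
  intros Hr. unfold Rdiv. rewrite !Rabs_mult, (Rabs_pos_eq (/ r)) by (left; apply Rinv_0_lt_compat; auto). field. lra.
Qed.

Lemma N_row1 A : (Rabs (m11 A) + Rabs (m12 A)) <= 2 * Kn * N A.
Proof.
  destruct A as [a b c d]; simpl.
  destruct (sq_pos_or a b) as [Hr|[Ha Hb]].
  2: { rewrite Ha, Hb, Rabs_R0. pose proof Kn_pos. apply Rle_trans with 0; [lra| apply Rmult_le_pos; [lra| apply N_pos]]. }
  apply (row_bound_gen _ (Mat2 (a / (a^2+b^2)) 0 (b / (a^2+b^2)) 0) E11); auto.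
  apply N_E11_pos.
  apply mat2_eq; unfold E11; simpl; field; simpl in Hr; lra.
  eapply Rle_trans. apply N_upper. simpl. rewrite Rabs_R0, <- abs_div_sum by auto. right; ring.
Qed.

Lemma N_row2 A : (Rabs (m21 A) + Rabs (m22 A)) <= 2 * Kn * N A.
Proof.
  destruct A as [a b c d]; simpl.
  destruct (sq_pos_or c d) as [Hr|[Ha Hb]].
  2: { rewrite Ha, Hb, Rabs_R0. pose proof Kn_pos. apply Rle_trans with 0; [lra| apply Rmult_le_pos; [lra| apply N_pos]]. }
  apply (row_bound_gen _ (Mat2 0 (c / (c^2+d^2)) 0 (d / (c^2+d^2))) E22); auto.
  apply N_E22_pos.
  apply mat2_eq; unfold E22; simpl; field; simpl in Hr; lra.
  eapply Rle_trans. apply N_upper. simpl. rewrite Rabs_R0, <- abs_div_sum by auto. right; ring.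
Qed.

End Norm.

Fixpoint sumphi (l : list R) : R := match l with [] => 0 | x :: l => phi x + sumphi l end.

Lemma sumphi_nonneg l : 0 <= sumphi l.
Proof. induction l; simpl; auto. lra. pose proof (phi_ge1 a); lra. Qed.

Lemma sumphi_app l1 l2 : sumphi (l1 ++ l2) = sumphi l1 + sumphi l2.
Proof. induction l1; simpl; auto. lra. rewrite IHl1; ring. Qed.

Lemma ce_ext n : forall F G L, (forall xs, F xs = G xs) -> cauchy_expect n F L -> cauchy_expect n G L.
Proof.
  induction n as [|n IH]; intros F G L E H.
  - simpl in *. rewrite <- E. auto.
  - destruct H as [g [Hg Hi]]. exists g. split; auto.
    intros x. apply (IH (fun xs => F (x :: xs))); auto.
Qed.

Lemma ce_sum n : forall c B, cauchy_expect n (fun xs => c + B * sumphi xs) (c + INR n * B * Cphi).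
Proof.
  induction n as [|n IH]; intros c B.
  - simpl. ring.
  - exists (fun x => (c + B * phi x) + INR n * B * Cphi). split.
    + intros x. apply (ce_ext n (fun xs => (c + B * phi x) + B * sumphi xs)).
      intros xs; simpl; ring. apply IH.
    + apply imp_improper.
      apply (imp_ext (fun x => (c + INR n * B * Cphi) * cauchy_density x + B * phid x)).
      { intros x; unfold phid; ring. }
      replace (c + INR (S n) * B * Cphi) with ((c + INR n * B * Cphi) * 1 + B * Cphi) by (rewrite S_INR; ring).
      apply imp_plus; apply imp_scal. apply imp_dens. apply imp_Cphi.
Qed.

Definition growth (B : R) (F : list R -> R) := exists A, forall xs, Rabs (F xs) <= A + B * sumphi xs.
Definition eqc (F : list R -> R) := forall pre x eps, 0 < eps -> exists d, 0 < d /\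
  forall y rest, Rabs (x - y) < d -> Rabs (F (pre ++ x :: rest) - F (pre ++ y :: rest)) <= eps.

Lemma ce_bound n F L A B : cauchy_expect n F L -> (forall xs, Rabs (F xs) <= A + B * sumphi xs) ->
  Rabs L <= A + INR n * B * Cphi.
Proof.
  intros H HB. apply Rabs_le. split.
  - pose proof (ce_mono n (fun xs => (- A) + (- B) * sumphi xs) F _ L 0 (ce_sum n (-A) (-B)) H).
    assert (- A + INR n * - B * Cphi <= L + 0).
    { apply H0. intros xs. specialize (HB xs). apply Rabs_def2b in HB. lra. }
    lra.
  - pose proof (ce_mono n F (fun xs => A + B * sumphi xs) L _ 0 H (ce_sum n A B)).
    assert (L <= A + INR n * B * Cphi + 0).
    { apply H0. intros xs. specialize (HB xs). apply Rabs_def2b in HB. lra. }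
    lra.
Qed.

Theorem ce_exists n : forall F B, growth B F -> eqc F -> exists L, cauchy_expect n F L.
Proof.
  induction n as [|n IH]; intros F B [A HA] HE.
  - exists (F []). reflexivity.
  - assert (Hx: forall x, exists L, cauchy_expect n (fun xs => F (x :: xs)) L).
    { intros x. apply (IH _ B).
      - exists (A + B * phi x). intros xs. specialize (HA (x :: xs)). simpl in HA. lra.
      - intros pre y eps He. destruct (HE (x :: pre) y eps He) as [d [Hd Hd']].
        exists d; split; auto. }
    set (g := fun x => epsilon (inhabits 0) (fun L => cauchy_expect n (fun xs => F (x :: xs)) L)).
    assert (Hg: forall x, cauchy_expect n (fun xs => F (x :: xs)) (g x)).
    { intros x. unfold g. apply epsilon_spec. apply Hx. }
    assert (Hgb: forall x, Rabs (g x) <= (A + B * phi x) + INR n * B * Cphi).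
    { intros x. apply (ce_bound n (fun xs => F (x :: xs))); auto.
      intros xs. specialize (HA (x :: xs)). simpl in HA. lra. }
    assert (Hgc: forall x, continuous g x).
    { intros x0. apply eps_cont. intros eps He.
      destruct (HE [] x0 eps He) as [d [Hd Hd']]. exists d; split; auto.
      intros x Hxx. simpl in Hd'.
      assert (Hx0: Rabs (x0 - x) < d) by (rewrite Rabs_minus_sym; auto).
      assert (A1: forall xs, F (x :: xs) <= F (x0 :: xs) + eps).
      { intros xs. pose proof (Hd' x xs Hx0) as K. apply Rabs_def2b in K. simpl in K |- *. lra. }
      assert (A2: forall xs, F (x0 :: xs) <= F (x :: xs) + eps).
      { intros xs. pose proof (Hd' x xs Hx0) as K. apply Rabs_def2b in K. simpl in K |- *. lra. }
      pose proof (ce_mono n _ _ _ _ eps (Hg x) (Hg x0) A1).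
      pose proof (ce_mono n _ _ _ _ eps (Hg x0) (Hg x) A2).
      apply Rabs_le; lra. }
    assert (Hint: exists L, imp (fun x => g x * cauchy_density x) L).
    { apply (imp_dom _ (fun x => (Rabs A + Rabs (INR n * B * Cphi)) * cauchy_density x + Rabs B * phid x)
          ((Rabs A + Rabs (INR n * B * Cphi)) * 1 + Rabs B * Cphi)).
      - apply cont_ex. intros x. apply (continuous_mult g cauchy_density). apply Hgc. apply dens_cont.
      - apply imp_plus; apply imp_scal. apply imp_dens. apply imp_Cphi.
      - intros x. specialize (Hgb x). pose proof (dens_pos x). pose proof (phi_ge1 x).
        unfold phid. rewrite Rabs_mult, (Rabs_pos_eq (cauchy_density x)) by lra.
        pose proof (Rle_abs A). pose proof (Rle_abs (INR n * B * Cphi)).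
        assert (B * phi x <= Rabs B * phi x).
        { apply Rmult_le_compat_r; [lra| apply Rle_abs]. }
        nra. }
    destruct Hint as [L HL]. exists L. exists g. split; auto. apply imp_improper; auto.
Qed.

Definition adj (Q : mat2) := Mat2 (m22 Q) (- m12 Q) (- m21 Q) (m11 Q).
Definition Yinv xi z := Mat2 0 1 (-1) (xi * z).
Definition Wm xi z Q := mat2_mul (adj Q) (mat2_mul (Yinv xi z) (mat2_mul E11 Q)).

Lemma YQW xi z Q : mat2_mul (mat2_mul (Ymat xi z) Q) (Wm xi z Q) = mat2_scale (det Q) (mat2_mul E11 Q).
Proof. apply mat2_eq; destruct Q; unfold Wm, adj, Yinv, Ymat, E11, det; simpl; ring. Qed.

Lemma scale1 A : mat2_scale 1 A = A.
Proof. apply mat2_eq; destruct A; simpl; ring. Qed.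

Section App.
Variable N : mat2 -> R.
Hypothesis hN : is_matrix_norm N.
Variable xi : R.
Hypothesis hxi : xi <> 0.

Lemma N_det1 S : det S = 1 -> / (2 * Kn N) <= N S.
Proof.
  intros HS. pose proof (N_row1 N hN S). pose proof (N_row2 N hN S). pose proof (Kn_pos N hN).
  pose proof (N_pos N hN S).
  assert (1 <= (Rabs (m11 S) + Rabs (m12 S)) * (Rabs (m21 S) + Rabs (m22 S))).
  { unfold det in HS. rewrite <- HS.
    pose proof (Rle_abs (m11 S * m22 S)). pose proof (Rle_abs (- (m12 S * m21 S))).
    rewrite Rabs_Ropp, Rabs_mult in H4. rewrite Rabs_mult in H3.
    pose proof (Rabs_pos (m11 S)). pose proof (Rabs_pos (m12 S)). pose proof (Rabs_pos (m21 S)). pose proof (Rabs_pos (m22 S)).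
    nra. }
  assert (1 <= (2 * Kn N * N S) * (2 * Kn N * N S)).
  { eapply Rle_trans; [exact H3|]. apply Rmult_le_compat; auto.
    pose proof (Rabs_pos (m11 S)); pose proof (Rabs_pos (m12 S)); lra.
    pose proof (Rabs_pos (m21 S)); pose proof (Rabs_pos (m22 S)); lra. }
  assert (0 <= 2 * Kn N * N S) by (apply Rmult_le_pos; lra).
  set (t := 2 * Kn N * N S) in *.
  assert (1 <= t) by nra.
  apply Rmult_le_reg_l with (2 * Kn N). lra. rewrite Rinv_r by lra. unfold t in *. lra.
Qed.

Lemma NS_pos l : 0 < N (Sprod xi l).
Proof.
  pose proof (N_det1 _ (det_Sprod xi l)). pose proof (Kn_pos N hN).
  assert (0 < / (2 * Kn N)) by (apply Rinv_0_lt_compat; lra). lra.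
Qed.

Definition Bg := Rabs (ln (Kn N * (2 + Rabs xi))) + 2.

Lemma lnNY x : ln (N (Ymat xi x)) <= Bg * phi x.
Proof.
  pose proof (Kn_pos N hN). pose proof (Rabs_pos xi). pose proof (Rabs_pos x).
  assert (HY: 0 < N (Ymat xi x)) by (apply N_posdef; auto; unfold Ymat, mat2_zero; intro H2; inversion H2; lra).
  pose proof (N_upper N hN (Ymat xi x)) as U. simpl in U.
  rewrite Rabs_mult, Rabs_R0, Rabs_R1 in U. replace (Rabs (-1)) with 1 in U by (rewrite Rabs_left; lra).
  assert (N (Ymat xi x) <= (Kn N * (2 + Rabs xi)) * (1 + Rabs x)).
  { eapply Rle_trans; [exact U|]. nra. }
  apply Rle_trans with (ln (Kn N * (2 + Rabs xi)) + ln (1 + Rabs x)).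
  { rewrite <- ln_mult by nra. apply ln_le; auto. }
  pose proof (ln_le_2phi x). pose proof (phi_ge1 x). unfold Bg.
  pose proof (Rle_abs (ln (Kn N * (2 + Rabs xi)))). pose proof (Rabs_pos (ln (Kn N * (2 + Rabs xi)))). nra.
Qed.

Lemma lnNS_upper l : ln (N (Sprod xi l)) <= ln (N mat2_id) + Bg * sumphi l.
Proof.
  induction l as [|x l IH] using rev_ind.
  - simpl. rewrite Sprod_nil. lra.
  - rewrite Sprod_snoc, sumphi_app. simpl.
    pose proof (NS_pos l). pose proof (NS_pos (l ++ [x])). rewrite Sprod_snoc in H0.
    assert (HY: 0 < N (Ymat xi x)) by (apply N_posdef; auto; unfold Ymat, mat2_zero; intro H2; inversion H2; lra).
    apply Rle_trans with (ln (N (Ymat xi x)) + ln (N (Sprod xi l))).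
    { rewrite <- ln_mult by auto. apply ln_le; auto. apply N_mul; auto. }
    pose proof (lnNY x). lra.
Qed.

Lemma F_growth : growth Bg (fun l => ln (N (Sprod xi l))).
Proof.
  exists (Rabs (ln (N mat2_id)) + Rabs (ln (2 * Kn N))). intros xs.
  pose proof (lnNS_upper xs). pose proof (Kn_pos N hN).
  assert (L: - ln (2 * Kn N) <= ln (N (Sprod xi xs))).
  { rewrite <- ln_Rinv by lra. apply ln_le. apply Rinv_0_lt_compat; lra. apply N_det1, det_Sprod. }
  pose proof (sumphi_nonneg xs). assert (0 <= Bg) by (unfold Bg; pose proof (Rabs_pos (ln (Kn N * (2 + Rabs xi)))); lra).
  assert (0 <= Bg * sumphi xs) by (apply Rmult_le_pos; auto).
  pose proof (Rle_abs (ln (N mat2_id))). pose proof (Rle_abs (- ln (2 * Kn N))) as H7. rewrite Rabs_Ropp in H7.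
  pose proof (Rabs_pos (ln (N mat2_id))). pose proof (Rabs_pos (ln (2 * Kn N))).
  cbv beta. pose proof (Rle_abs (ln (2 * Kn N))). apply Rabs_le; lra.
Qed.

Lemma lipschitz_step P Q x y : det P = 1 -> det Q = 1 ->
  ln (N (mat2_mul P (mat2_mul (Ymat xi x) Q))) - ln (N (mat2_mul P (mat2_mul (Ymat xi y) Q)))
  <= Rabs xi * Rabs (x - y) * N (Wm xi y Q).
Proof.
  intros HP HQ.
  set (S := mat2_mul P (mat2_mul (Ymat xi x) Q)). set (S' := mat2_mul P (mat2_mul (Ymat xi y) Q)).
  assert (dY: forall z, det (Ymat xi z) = 1) by (intros; unfold det, Ymat; simpl; ring).
  assert (HS: 0 < N S).
  { pose proof (N_det1 S ltac:(unfold S; rewrite !det_mul, HP, HQ, dY; ring)). pose proof (Kn_pos N hN).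
    assert (0 < / (2 * Kn N)) by (apply Rinv_0_lt_compat; lra). lra. }
  assert (HS': 0 < N S').
  { pose proof (N_det1 S' ltac:(unfold S'; rewrite !det_mul, HP, HQ, dY; ring)). pose proof (Kn_pos N hN).
    assert (0 < / (2 * Kn N)) by (apply Rinv_0_lt_compat; lra). lra. }
  assert (E1: S = mat2_add S' (mat2_scale (xi * (x - y)) (mat2_mul P (mat2_mul E11 Q)))).
  { unfold S, S'. apply mat2_eq; destruct P, Q; unfold Ymat, E11; simpl; ring. }
  assert (E2: mat2_mul P (mat2_mul E11 Q) = mat2_mul S' (Wm xi y Q)).
  { unfold S'. rewrite <- mul_assoc, YQW, HQ, scale1. auto. }
  assert (B: N S <= N S' * (1 + Rabs xi * Rabs (x - y) * N (Wm xi y Q))).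
  { rewrite E1 at 1. eapply Rle_trans. apply N_add; auto. rewrite N_scale; auto. rewrite E2.
    pose proof (N_mul N hN S' (Wm xi y Q)). rewrite Rabs_mult.
    pose proof (Rabs_pos xi). pose proof (Rabs_pos (x - y)).
    assert (0 <= Rabs xi * Rabs (x - y)) by (apply Rmult_le_pos; auto). nra. }
  assert (R: ln (N S) - ln (N S') = ln (N S / N S')).
  { unfold Rdiv. rewrite ln_mult; [rewrite ln_Rinv; [ring|auto] | auto | apply Rinv_0_lt_compat; auto]. }
  rewrite R. eapply Rle_trans. apply ln_le_sub1. apply Rdiv_lt_0_compat; auto.
  apply Rle_trans with ((N S' * (1 + Rabs xi * Rabs (x - y) * N (Wm xi y Q))) / N S' - 1).
  { unfold Rdiv. apply Rplus_le_compat_r. apply Rmult_le_compat_r; auto. left; apply Rinv_0_lt_compat; auto. }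
  right. field. lra.
Qed.

Lemma NW_bound z Q x : Rabs (z - x) < 1 ->
  N (Wm xi z Q) <= N (adj Q) * (Kn N * (2 + Rabs xi * (Rabs x + 1))) * N (mat2_mul E11 Q).
Proof.
  intros Hz. unfold Wm.
  eapply Rle_trans. apply N_mul; auto.
  rewrite Rmult_assoc. apply Rmult_le_compat_l. apply N_pos; auto.
  eapply Rle_trans. apply N_mul; auto.
  apply Rmult_le_compat_r. apply N_pos; auto.
  eapply Rle_trans. apply N_upper; auto. unfold Yinv; simpl.
  rewrite Rabs_R0, Rabs_R1, Rabs_mult. replace (Rabs (-1)) with 1 by (rewrite Rabs_left; lra).
  apply Rmult_le_compat_l. pose proof (Kn_pos N hN); lra.
  assert (Rabs z <= Rabs x + 1).
  { pose proof (Rabs_triang (z - x) x). replace (z - x + x) with z in H by ring. lra. }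
  pose proof (Rabs_pos xi). nra.
Qed.

Lemma F_eqc : eqc (fun l => ln (N (Sprod xi l))).
Proof.
  intros pre x eps He. cbv beta.
  set (Q := Sprod xi pre).
  set (Cw := N (adj Q) * (Kn N * (2 + Rabs xi * (Rabs x + 1))) * N (mat2_mul E11 Q)).
  assert (HCw: 0 <= Cw).
  { unfold Cw. pose proof (Kn_pos N hN). pose proof (Rabs_pos xi). pose proof (Rabs_pos x).
    apply Rmult_le_pos. apply Rmult_le_pos. apply N_pos; auto. apply Rmult_le_pos; nra. apply N_pos; auto. }
  set (K := Rabs xi * Cw + 1).
  assert (HK: 0 < K) by (unfold K; pose proof (Rabs_pos xi); nra).
  exists (Rmin 1 (eps / K)). split.
  { apply Rmin_pos; [lra| apply Rdiv_lt_0_compat; auto]. }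
  intros y rest Hy.
  assert (Hy1: Rabs (x - y) < 1) by (pose proof (Rmin_l 1 (eps / K)); lra).
  assert (Hy2: Rabs (x - y) < eps / K) by (pose proof (Rmin_r 1 (eps / K)); lra).
  rewrite !Sprod_mid. fold Q.
  pose proof (det_Sprod xi rest) as HP. pose proof (det_Sprod xi pre) as HQ. fold Q in HQ.
  pose proof (lipschitz_step (Sprod xi rest) Q x y HP HQ) as L1.
  pose proof (lipschitz_step (Sprod xi rest) Q y x HP HQ) as L2.
  pose proof (NW_bound y Q x ltac:(rewrite Rabs_minus_sym; auto)) as W1. fold Cw in W1.
  pose proof (NW_bound x Q x ltac:(rewrite Rminus_diag, Rabs_R0; lra)) as W2. fold Cw in W2.
  rewrite (Rabs_minus_sym y x) in L2.
  assert (Hb: Rabs xi * Rabs (x - y) * Cw <= eps).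
  { pose proof (Rabs_pos xi). pose proof (Rabs_pos (x - y)).
    apply Rle_trans with (Rabs (x - y) * K). unfold K. nra.
    apply Rle_trans with (eps / K * K). apply Rmult_le_compat_r; lra. right; field; lra. }
  assert (Rabs xi * Rabs (x - y) * N (Wm xi y Q) <= Rabs xi * Rabs (x - y) * Cw).
  { apply Rmult_le_compat_l; auto. apply Rmult_le_pos; apply Rabs_pos. }
  assert (Rabs xi * Rabs (x - y) * N (Wm xi x Q) <= Rabs xi * Rabs (x - y) * Cw).
  { apply Rmult_le_compat_l; auto. apply Rmult_le_pos; apply Rabs_pos. }
  apply Rabs_le; lra.
Qed.

End App.

Lemma gam_ge1 xi : 1 <= gam xi.
Proof.
  unfold gam. pose proof (Rabs_pos xi).
  assert (2 <= sqrt (xi^2 + 4)).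
  { replace 2 with (sqrt 4). apply sqrt_le_1_alt. pose proof (pow2_ge_0 xi); lra.
    replace 4 with (2 * 2) by ring. rewrite sqrt_square; lra. }
  lra.
Qed.

Lemma sig_sq_le1 xi (hxi : xi <> 0) : sig xi ^ 2 <= 1.
Proof.
  unfold sig. pose proof (gam_ge1 xi). pose proof (gam_pos xi).
  destruct (sg_cases xi hxi) as [[-> _]|[-> _]].
  - replace ((1 / gam xi)^2) with (/ (gam xi * gam xi)) by (field; lra).
    rewrite <- Rinv_1. apply Rinv_le_contravar; nra.
  - replace ((-1 / gam xi)^2) with (/ (gam xi * gam xi)) by (field; lra).
    rewrite <- Rinv_1. apply Rinv_le_contravar; nra.
Qed.

Lemma sg_sig xi (hxi : xi <> 0) : sg xi * sig xi = / gam xi.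
Proof.
  unfold sig. pose proof (gam_pos xi). destruct (sg_cases xi hxi) as [[-> _]|[-> _]]; field; lra.
Qed.

Lemma sg_sq xi (hxi : xi <> 0) : sg xi * sg xi = 1.
Proof. destruct (sg_cases xi hxi) as [[-> _]|[-> _]]; ring. Qed.

Lemma xi_sg xi (hxi : xi <> 0) : 0 <= xi * sg xi.
Proof. destruct (sg_cases xi hxi) as [[-> E]|[-> E]]; pose proof (Rabs_pos xi); lra. Qed.

Theorem proposition4p1 (xi : R) (hxi : xi <> 0) (N : mat2 -> R)
  (hN : is_matrix_norm N) :
  exists E : nat -> R,
    (forall n, cauchy_expect n (fun es => ln (N (Sprod xi es))) (E n)) /\
    Un_cv (fun n => E n / INR n) (ln ((Rabs xi + sqrt (xi ^ 2 + 4)) / 2)).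
Proof.
  set (F := fun es => ln (N (Sprod xi es))).
  set (E := fun n => epsilon (inhabits 0) (fun L => cauchy_expect n F L)).
  assert (HE: forall n, cauchy_expect n F (E n)).
  { intros n. unfold E. apply epsilon_spec.
    apply (ce_exists n F (Bg N xi)). apply F_growth; auto. apply F_eqc; auto. }
  exists E. split; [exact HE|].
  fold (gam xi).
  pose proof (Kn_pos N hN) as HKn.
  pose proof (sig_sq_le1 xi hxi) as Hs2.
  pose proof (gam_pos xi) as Hg.
  assert (Low: forall n, INR n * ln (gam xi) <= E n + ln (2 * Kn N)).
  { intros n.
    pose proof (T xi hxi n (1, 0) (0, 0) ltac:(unfold condab, cn2; simpl; split; lra)) as HT.
    replace (lnm (cadd (1, 0) (cmul (0, 0) (ccst xi)))) with 0 in HT.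
    2: { unfold lnm, cn2, cadd, cmul, ccst; simpl. replace ((1 + (0 * 0 - 0 * - sig xi)) * ((1 + (0 * 0 - 0 * - sig xi)) * 1) +
          (0 + (0 * - sig xi + 0 * 0)) * ((0 + (0 * - sig xi + 0 * 0)) * 1)) with 1 by ring. rewrite ln_1; ring. }
    rewrite Rplus_0_r in HT.
    apply (ce_mono n _ _ _ _ _ HT (HE n)).
    intros xs. unfold Gf, F, lnm. set (S := Sprod xi xs).
    pose proof (det_Sprod xi xs) as Hd. fold S in Hd.
    pose proof (cnU_pos xi hxi S Hd) as HU.
    pose proof (N_row1 N hN S) as Hr.
    assert (HNS: 0 < N S) by (unfold S; apply NS_pos; auto).
    unfold cn2, cadd, cmul, Uv, Uw; simpl.
    replace ((1 * m11 S - 0 * (- sig xi * m12 S) + (0 * m21 S - 0 * (- sig xi * m22 S))) *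
       ((1 * m11 S - 0 * (- sig xi * m12 S) + (0 * m21 S - 0 * (- sig xi * m22 S))) * 1) +
       (1 * (- sig xi * m12 S) + 0 * m11 S + (0 * (- sig xi * m22 S) + 0 * m21 S)) *
       ((1 * (- sig xi * m12 S) + 0 * m11 S + (0 * (- sig xi * m22 S) + 0 * m21 S)) * 1))
      with (m11 S ^ 2 + (- sig xi * m12 S) ^ 2) by ring.
    assert (Hb: m11 S ^ 2 + (- sig xi * m12 S) ^ 2 <= (2 * Kn N * N S) * (2 * Kn N * N S)).
    { assert (m11 S ^ 2 + (- sig xi * m12 S) ^ 2 <= (Rabs (m11 S) + Rabs (m12 S))^2).
      { replace ((- sig xi * m12 S) ^ 2) with (sig xi ^ 2 * m12 S ^ 2) by ring.
        rewrite <- (pow2_abs (m11 S)), <- (pow2_abs (m12 S)).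
        pose proof (Rabs_pos (m11 S)). pose proof (Rabs_pos (m12 S)). pose proof (pow2_ge_0 (Rabs (m12 S))).
        assert (sig xi ^ 2 * Rabs (m12 S) ^ 2 <= Rabs (m12 S) ^ 2) by nra. nra. }
      pose proof (Rabs_pos (m11 S)). pose proof (Rabs_pos (m12 S)).
      assert ((Rabs (m11 S) + Rabs (m12 S))^2 <= (2 * Kn N * N S) * (2 * Kn N * N S)).
      { simpl. rewrite Rmult_1_r. apply Rmult_le_compat; lra. }
      lra. }
    apply Rle_trans with (/ 2 * ln ((2 * Kn N * N S) * (2 * Kn N * N S))).
    { apply Rmult_le_compat_l; [lra|]. apply ln_le; auto. }
    rewrite ln_sq2 by (apply Rmult_lt_0_compat; lra). rewrite ln_mult by lra. lra. }
  set (Cv := lnm (cadd (1, 0) (cmul (0, sg xi) (ccst xi)))).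
  set (Cu := / 2 * ln (4 * (Kn N * Kn N) / (sig xi ^ 2))).
  assert (Up: forall n, E n <= INR n * ln (gam xi) + Cv + Cu).
  { intros n.
    pose proof (T xi hxi n (1, 0) (0, sg xi) ltac:(unfold condab, cn2; simpl; split; [lra|]; pose proof (xi_sg xi hxi); lra)) as HT.
    fold Cv in HT.
    apply (ce_mono n _ _ _ _ _ (HE n) HT).
    intros xs. unfold Gf, F, lnm. set (S := Sprod xi xs).
    pose proof (det_Sprod xi xs) as Hd. fold S in Hd.
    assert (HNS: 0 < N S) by (unfold S; apply NS_pos; auto).
    pose proof (N_upper N hN S) as Hu.
    pose proof (sig_ne0 xi hxi) as Hsn.
    assert (Hsp: 0 < sig xi ^ 2) by (apply pow2_gt_0; auto).
    set (Z := cn2 (cadd (cmul (1, 0) (Uv xi S)) (cmul (0, sg xi) (Uw xi S)))).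
    assert (HZ: sig xi ^ 2 * (m11 S ^ 2 + m12 S ^ 2 + m21 S ^ 2 + m22 S ^ 2) <= Z).
    { unfold Z, cn2, cadd, cmul, Uv, Uw; simpl.
      pose proof (sg_sig xi hxi) as SS. pose proof (sg_sq xi hxi) as SQ.
      unfold det in Hd.
      replace ((1 * m11 S - 0 * (- sig xi * m12 S) + (0 * m21 S - sg xi * (- sig xi * m22 S))) *
         ((1 * m11 S - 0 * (- sig xi * m12 S) + (0 * m21 S - sg xi * (- sig xi * m22 S))) * 1) +
         (1 * (- sig xi * m12 S) + 0 * m11 S + (0 * (- sig xi * m22 S) + sg xi * m21 S)) *
         ((1 * (- sig xi * m12 S) + 0 * m11 S + (0 * (- sig xi * m22 S) + sg xi * m21 S)) * 1))
        with (m11 S ^ 2 + sig xi ^ 2 * m12 S ^ 2 + (sg xi * sg xi) * (m21 S ^ 2 + sig xi ^ 2 * m22 S ^ 2)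
              + 2 * (sg xi * sig xi) * (m11 S * m22 S - m12 S * m21 S)) by ring.
      rewrite SS, SQ, Hd.
      assert (0 < / gam xi) by (apply Rinv_0_lt_compat; lra).
      pose proof (pow2_ge_0 (m11 S)). pose proof (pow2_ge_0 (m12 S)). pose proof (pow2_ge_0 (m21 S)). pose proof (pow2_ge_0 (m22 S)).
      assert (sig xi ^ 2 * m11 S ^ 2 <= m11 S ^ 2) by nra.
      assert (sig xi ^ 2 * m21 S ^ 2 <= m21 S ^ 2) by nra.
      nra. }
    set (s1 := Rabs (m11 S) + Rabs (m12 S) + Rabs (m21 S) + Rabs (m22 S)) in *.
    assert (Hs1: s1 ^ 2 <= 4 * (m11 S ^ 2 + m12 S ^ 2 + m21 S ^ 2 + m22 S ^ 2)).
    { unfold s1. rewrite <- (pow2_abs (m11 S)), <- (pow2_abs (m12 S)), <- (pow2_abs (m21 S)), <- (pow2_abs (m22 S)).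
      pose proof (pow2_ge_0 (Rabs (m11 S) - Rabs (m12 S))). pose proof (pow2_ge_0 (Rabs (m11 S) - Rabs (m21 S))).
      pose proof (pow2_ge_0 (Rabs (m11 S) - Rabs (m22 S))). pose proof (pow2_ge_0 (Rabs (m12 S) - Rabs (m21 S))).
      pose proof (pow2_ge_0 (Rabs (m12 S) - Rabs (m22 S))). pose proof (pow2_ge_0 (Rabs (m21 S) - Rabs (m22 S))).
      nra. }
    assert (Hs0: 0 <= s1) by (unfold s1; pose proof (Rabs_pos (m11 S)); pose proof (Rabs_pos (m12 S));
                                pose proof (Rabs_pos (m21 S)); pose proof (Rabs_pos (m22 S)); lra).
    assert (Hsq: N S * N S <= 4 * (Kn N * Kn N) / (sig xi ^ 2) * Z).
    { assert (N S * N S <= Kn N * Kn N * s1 ^ 2) by (replace (Kn N * Kn N * s1 ^ 2) with ((Kn N * s1) * (Kn N * s1)) by ring; apply Rmult_le_compat; lra).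
      apply Rle_trans with (Kn N * Kn N * (4 * (m11 S ^ 2 + m12 S ^ 2 + m21 S ^ 2 + m22 S ^ 2))).
      { eapply Rle_trans; [exact H|]. apply Rmult_le_compat_l; nra. }
      replace (4 * (Kn N * Kn N) / sig xi ^ 2 * Z) with (Kn N * Kn N * (4 * (Z / sig xi ^ 2))) by (field; lra).
      apply Rmult_le_compat_l. nra. apply Rmult_le_compat_l. lra.
      apply Rmult_le_reg_r with (sig xi ^ 2); auto. unfold Rdiv. rewrite Rmult_assoc, Rinv_l by lra. lra. }
    assert (Hc: 0 < 4 * (Kn N * Kn N) / sig xi ^ 2) by (apply Rdiv_lt_0_compat; nra).
    assert (HZp: 0 < Z).
    { destruct (Rle_or_lt Z 0) as [Hz|Hz]; auto.
      set (c := 4 * (Kn N * Kn N) / sig xi ^ 2) in *.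
      assert (c * Z <= 0) by nra. assert (0 < N S * N S) by nra. lra. }
    apply Rle_trans with (/ 2 * ln (4 * (Kn N * Kn N) / (sig xi ^ 2) * Z)).
    { rewrite <- (Rmult_1_l (ln (N S))). replace 1 with (/2 * 2) by field. rewrite Rmult_assoc.
      apply Rmult_le_compat_l; [lra|]. rewrite <- ln_sq2 by auto. apply ln_le; nra. }
    rewrite ln_mult by auto. unfold Cu. fold Z. lra. }
  set (C := Rabs (ln (2 * Kn N)) + Rabs (Cv + Cu)).
  intros eps He.
  destruct (archimed (C / eps)) as [Harch _].
  assert (HC: 0 <= C) by (unfold C; pose proof (Rabs_pos (ln (2 * Kn N))); pose proof (Rabs_pos (Cv + Cu)); lra).
  exists (S (Z.to_nat (up (C / eps)))). intros n Hn.
  assert (Hn1: (1 <= n)%nat) by lia.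
  assert (HnR: 0 < INR n) by (apply lt_0_INR; lia).
  assert (HnC: C / eps < INR n).
  { apply Rlt_le_trans with (IZR (up (C / eps))); auto.
    assert (0 <= C / eps) by (apply Rmult_le_pos; [lra| left; apply Rinv_0_lt_compat; lra]).
    assert (0 <= up (C / eps))%Z by (apply le_IZR; lra).
    rewrite <- (Z2Nat.id (up (C / eps))) by auto. rewrite <- INR_IZR_INZ. apply le_INR. lia. }
  unfold R_dist.
  replace (E n / INR n - ln (gam xi)) with ((E n - INR n * ln (gam xi)) / INR n) by (field; lra).
  assert (Hb: Rabs (E n - INR n * ln (gam xi)) <= C).
  { specialize (Low n). specialize (Up n). unfold C.
    pose proof (Rle_abs (ln (2 * Kn N))). pose proof (Rle_abs (Cv + Cu)).
    pose proof (Rabs_pos (ln (2 * Kn N))). pose proof (Rabs_pos (Cv + Cu)).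
    apply Rabs_le; lra. }
  unfold Rdiv. rewrite Rabs_mult, Rabs_inv, (Rabs_pos_eq (INR n)) by lra.
  apply Rle_lt_trans with (C * / INR n).
  { apply Rmult_le_compat_r; auto. left; apply Rinv_0_lt_compat; auto. }
  apply Rmult_lt_reg_r with (INR n); auto. rewrite Rmult_assoc, Rinv_l, Rmult_1_r by lra.
  apply Rmult_lt_reg_r with (/ eps). apply Rinv_0_lt_compat; auto.
  replace (eps * INR n * / eps) with (INR n) by (field; lra). unfold Rdiv in HnC. lra.
Qed.
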